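(* Let $\mathcal H$ be a separable infinite-dimensional Hilbert space, $\omega\in(0,1)$, and let $\mathfrak i$ be the principal Calkin space generated by the sequence $(\omega^{n-1})_{n\ge1}$. Then there exists $A\in\mathbf B(\mathcal H)$ such that $s(A)\in\mathfrak i$ and $\mathrm h(M_{A,A})\notin\mathfrak i$, where $M_{A,A}:\mathbf B(\mathcal H)\to\mathbf B(\mathcal H)$, $X\mapsto AXA$.
   Context: $c_0$: complex null sequences; $\alpha^\star$: non-increasing rearrangement of $(|\alpha_n|)$. A Calkin space is a linear subspace $\mathfrak i\subseteq c_0$ such that $\alpha\in\mathfrak i,\beta\in c_0,\beta^\star\le\alpha^\star$ imply $\beta\in\mathfrak i$; the principal Calkin space generated by $\alpha$ is the smallest Calkin space containing $\alpha$. $s(A)$ is the singular number sequence of a compact operator $A$. Hilbert numbers of a bounded operator $T:\mathcal X\to\mathcal Y$: $\mathrm h_n(T)=\sup s_n(ATB)$ over all Hilbert spaces $\mathcal H',\mathcal K'$ and contractions $A\in\mathbf B(\mathcal Y,\mathcal H')$, $B\in\mathbf B(\mathcal K',\mathcal X)$. *)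

(* Defs.v *)
From Stdlib Require Import Reals Lra Psatz List.
From Coquelicot Require Import Coquelicot.
Open Scope R_scope.

Definition hilbert_axioms (V : Type) (zero : V) (add : V -> V -> V)
  (opp : V -> V) (scal : C -> V -> V) (inner : V -> V -> C) : Prop :=
  (forall x y z, add x (add y z) = add (add x y) z) /\
  (forall x y, add x y = add y x) /\
  (forall x, add zero x = x) /\
  (forall x, add x (opp x) = zero) /\
  (forall a b x, scal a (scal b x) = scal (Cmult a b) x) /\
  (forall x, scal (RtoC 1) x = x) /\
  (forall a x y, scal a (add x y) = add (scal a x) (scal a y)) /\
  (forall a b x, scal (Cplus a b) x = add (scal a x) (scal b x)) /\
  (forall x y z, inner (add x y) z = Cplus (inner x z) (inner y z)) /\
  (forall a x y, inner (scal a x) y = Cmult a (inner x y)) /\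
  (forall x y, inner y x = Cconj (inner x y)) /\
  (forall x, 0 <= Re (inner x x) /\ Im (inner x x) = 0) /\
  (forall x, inner x x = RtoC 0 -> x = zero) /\
  (forall u : nat -> V,
     (forall eps, 0 < eps -> exists N, forall m n, (N <= m)%nat -> (N <= n)%nat ->
        sqrt (Re (inner (add (u m) (opp (u n))) (add (u m) (opp (u n))))) < eps) ->
     exists l, is_lim_seq
       (fun n => sqrt (Re (inner (add (u n) (opp l)) (add (u n) (opp l))))) 0).

Record HSpace := {
  hcar :> Type;
  hzero : hcar;
  hadd : hcar -> hcar -> hcar;
  hopp : hcar -> hcar;
  hscal : C -> hcar -> hcar;
  hinner : hcar -> hcar -> C;
  hax : @hilbert_axioms hcar hzero hadd hopp hscal hinner
}.
Arguments hzero {h}.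
Arguments hadd {h}.
Arguments hopp {h}.
Arguments hscal {h}.
Arguments hinner {h}.

Definition hnorm {H : HSpace} (x : H) : R := sqrt (Re (hinner x x)).
Definition hsub {H : HSpace} (x y : H) : H := hadd x (hopp y).

Fixpoint lincomb {H : HSpace} (k : nat) (c : nat -> C) (v : nat -> H) : H :=
  match k with
  | O => hzero
  | S k' => hadd (lincomb k' c v) (hscal (c k') (v k'))
  end.

Definition separable (H : HSpace) : Prop :=
  exists d : nat -> H, forall (x : H) eps, 0 < eps -> exists n, hnorm (hsub x (d n)) < eps.

Definition infinite_dim (H : HSpace) : Prop :=
  forall (k : nat) (v : nat -> H), exists x : H, ~ exists c, x = lincomb k c v.

Definition is_linear {H1 H2 : HSpace} (f : H1 -> H2) : Prop :=
  (forall x y, f (hadd x y) = hadd (f x) (f y)) /\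
  (forall a x, f (hscal a x) = hscal a (f x)).

Definition is_bounded {H1 H2 : HSpace} (f : H1 -> H2) : Prop :=
  exists c, 0 <= c /\ forall x, hnorm (f x) <= c * hnorm x.

(** operator norm (used only for bounded maps, where it is finite) *)
Definition opnorm {H1 H2 : HSpace} (f : H1 -> H2) : R :=
  real (Lub_Rbar (fun r => exists x, hnorm x <= 1 /\ r = hnorm (f x))).

Definition BH (H : HSpace) : Type := { f : H -> H | is_linear f /\ is_bounded f }.

Lemma comp3_lb (H : HSpace) (A X : H -> H) :
  is_linear A /\ is_bounded A -> is_linear X /\ is_bounded X ->
  is_linear (fun h => A (X (A h))) /\ is_bounded (fun h => A (X (A h))).
Proof.
  intros [[LA1 LA2] [a [Ha BA]]] [[LX1 LX2] [b [Hb BX]]]; split.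
  - split; intros; [rewrite LA1, LX1, LA1 | rewrite LA2, LX2, LA2]; reflexivity.
  - exists (a * (b * a)); split.
    + apply Rmult_le_pos; [|apply Rmult_le_pos]; assumption.
    + intros h. eapply Rle_trans; [apply BA|].
      eapply Rle_trans; [apply Rmult_le_compat_l; [exact Ha| apply BX]|].
      pose proof (BA h) as E1. pose proof (Rmult_le_pos a b Ha Hb) as E2.
      pose proof (Rmult_le_compat_l (a*b) _ _ E2 E1) as E3.
      replace (a * (b * a) * hnorm h) with (a * b * (a * hnorm h)) by ring.
      rewrite <- Rmult_assoc. exact E3.
Qed.

Definition MAA {H : HSpace} (A : BH H) : BH H -> BH H :=
  fun X => exist _ (fun h => proj1_sig A (proj1_sig X (proj1_sig A h)))
                   (@comp3_lb H _ _ (proj2_sig A) (proj2_sig X)).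

Definition rank_le {H1 H2 : HSpace} (k : nat) (F : H1 -> H2) : Prop :=
  exists v : nat -> H2, forall x, exists c, F x = lincomb k c v.

(** singular numbers s_{k+1}(S) (0-based index k), i.e. approximation numbers
    inf { ||S - F|| : rank F < k+1 } *)
Definition snum {H1 H2 : HSpace} (S : H1 -> H2) (k : nat) : R :=
  real (Glb_Rbar (fun r => exists F : H1 -> H2,
     is_linear F /\ is_bounded F /\ rank_le k F /\ r = opnorm (fun x => hsub (S x) (F x)))).

(** Hilbert numbers h_{k+1}(T) of T : B(H) -> B(H) (0-based index k) *)
Definition hnum {H : HSpace} (T : BH H -> BH H) (k : nat) : R :=
  real (Lub_Rbar (fun r => exists (H' K' : HSpace) (A' : BH H -> H') (B' : K' -> BH H),
     (forall X Y Z : BH H, (forall h, proj1_sig Z h = hadd (proj1_sig X h) (proj1_sig Y h)) ->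
         A' Z = hadd (A' X) (A' Y)) /\
     (forall (a : C) (X Z : BH H), (forall h, proj1_sig Z h = hscal a (proj1_sig X h)) ->
         A' Z = hscal a (A' X)) /\
     (forall X : BH H, hnorm (A' X) <= opnorm (proj1_sig X)) /\
     (forall x y h, proj1_sig (B' (hadd x y)) h = hadd (proj1_sig (B' x) h) (proj1_sig (B' y) h)) /\
     (forall a x h, proj1_sig (B' (hscal a x)) h = hscal a (proj1_sig (B' x) h)) /\
     (forall x, opnorm (proj1_sig (B' x)) <= hnorm x) /\
     r = snum (fun x => A' (T (B' x))) k)).

Definition is_c0 (a : nat -> C) : Prop := is_lim_seq (fun n => Cmod (a n)) 0.

(** non-increasing rearrangement (0-based):
    a*_k = inf { sup_{j notin F} |a_j| : F finite, #F <= k } *)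
Definition dstar (a : nat -> C) (k : nat) : R :=
  real (Glb_Rbar (fun r => exists l : list nat, (length l <= k)%nat /\
     r = real (Lub_Rbar (fun s => exists j, ~ In j l /\ s = Cmod (a j))))).

Definition is_calkin (I : (nat -> C) -> Prop) : Prop :=
  (forall a, I a -> is_c0 a) /\
  I (fun _ => RtoC 0) /\
  (forall a b, I a -> I b -> I (fun n => Cplus (a n) (b n))) /\
  (forall (c : C) a, I a -> I (fun n => Cmult c (a n))) /\
  (forall a b, I a -> is_c0 b -> (forall n, dstar b n <= dstar a n) -> I b).

(** membership in the principal Calkin space generated by alpha
    (= intersection of all Calkin spaces containing alpha) *)
Definition in_principal (alpha b : nat -> C) : Prop :=
  forall I, is_calkin I -> I alpha -> I b.

(* Main.v *)
Require Import Defs.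
From Stdlib Require Import Reals.
From Coquelicot Require Import Coquelicot.
Open Scope R_scope.

From Stdlib Require Import Reals Lra Psatz List Arith ZArith ClassicalEpsilon Classical.
From Coquelicot Require Import Coquelicot.
Require Import Defs.
Open Scope R_scope.

Lemma lub_le (E : R -> Prop) (M : R) :
  (forall x, E x -> x <= M) -> (exists x, E x) -> real (Lub_Rbar E) <= M.
Proof.
  intros HM [x0 Hx0].
  destruct (Lub_Rbar_correct E) as [Hub Hl].
  assert (H1 : Rbar_le (Lub_Rbar E) M) by (apply Hl; intros y Hy; simpl; apply HM; auto).
  assert (H2 : Rbar_le x0 (Lub_Rbar E)) by (apply Hub; auto).
  destruct (Lub_Rbar E); simpl in *; try contradiction; lra.
Qed.

Lemma lub_ge (E : R -> Prop) (M x : R) :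
  (forall y, E y -> y <= M) -> E x -> x <= real (Lub_Rbar E).
Proof.
  intros HM Hx.
  destruct (Lub_Rbar_correct E) as [Hub Hl].
  assert (H1 : Rbar_le (Lub_Rbar E) M) by (apply Hl; intros y Hy; simpl; apply HM; auto).
  assert (H2 : Rbar_le x (Lub_Rbar E)) by (apply Hub; auto).
  destruct (Lub_Rbar E); simpl in *; try contradiction; lra.
Qed.

Lemma glb_ge (E : R -> Prop) (m : R) :
  (forall x, E x -> m <= x) -> (exists x, E x) -> m <= real (Glb_Rbar E).
Proof.
  intros HM [x0 Hx0].
  destruct (Glb_Rbar_correct E) as [Hlb Hl].
  assert (H1 : Rbar_le m (Glb_Rbar E)) by (apply Hl; intros y Hy; simpl; apply HM; auto).
  assert (H2 : Rbar_le (Glb_Rbar E) x0) by (apply Hlb; auto).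
  destruct (Glb_Rbar E); simpl in *; try contradiction; lra.
Qed.

Lemma glb_le (E : R -> Prop) (m x : R) :
  (forall y, E y -> m <= y) -> E x -> real (Glb_Rbar E) <= x.
Proof.
  intros HM Hx.
  destruct (Glb_Rbar_correct E) as [Hlb Hl].
  assert (H1 : Rbar_le m (Glb_Rbar E)) by (apply Hl; intros y Hy; simpl; apply HM; auto).
  assert (H2 : Rbar_le (Glb_Rbar E) x) by (apply Hlb; auto).
  destruct (Glb_Rbar E); simpl in *; try contradiction; lra.
Qed.

Lemma glb_nonneg (E : R -> Prop) :
  (forall x, E x -> 0 <= x) -> 0 <= real (Glb_Rbar E).
Proof.
  intros HM.
  destruct (Glb_Rbar_correct E) as [Hlb Hl].
  assert (H1 : Rbar_le 0 (Glb_Rbar E)) by (apply Hl; intros y Hy; simpl; apply HM; auto).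
  destruct (Glb_Rbar E); simpl in *; try contradiction; lra.
Qed.

Lemma glb_approx (E : R -> Prop) (m eps : R) :
  (forall x, E x -> m <= x) -> (exists x, E x) -> 0 < eps ->
  exists x, E x /\ x < real (Glb_Rbar E) + eps.
Proof.
  intros HM [x0 Hx0] He.
  destruct (Glb_Rbar_correct E) as [Hlb Hl].
  assert (H1 : Rbar_le m (Glb_Rbar E)) by (apply Hl; intros y Hy; simpl; apply HM; auto).
  assert (H2 : Rbar_le (Glb_Rbar E) x0) by (apply Hlb; auto).
  destruct (Glb_Rbar E) as [g| |] eqn:Eg; simpl in *; try contradiction.
  destruct (Classical_Prop.classic (exists x, E x /\ x < g + eps)) as [Hc|Hc]; auto.
  exfalso.
  assert (Rbar_le (g + eps) g).
  { apply Hl. intros y Hy. simpl. destruct (Rlt_le_dec y (g+eps)); auto.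
    exfalso; apply Hc; eauto. }
  simpl in H. lra.
Qed.



Lemma ax_assoc {H : HSpace} (x y z : H) : hadd x (hadd y z) = hadd (hadd x y) z.
Proof. destruct (hax H) as (a&_). apply a. Qed.
Lemma ax_comm {H : HSpace} (x y : H) : hadd x y = hadd y x.
Proof. destruct (hax H) as (_&a&_). apply a. Qed.
Lemma ax_zero {H : HSpace} (x : H) : hadd hzero x = x.
Proof. destruct (hax H) as (_&_&a&_). apply a. Qed.
Lemma ax_opp {H : HSpace} (x : H) : hadd x (hopp x) = hzero.
Proof. destruct (hax H) as (_&_&_&a&_). apply a. Qed.
Lemma ax_scal_assoc {H : HSpace} a b (x : H) : hscal a (hscal b x) = hscal (Cmult a b) x.
Proof. destruct (hax H) as (_&_&_&_&c&_). apply c. Qed.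
Lemma ax_scal1 {H : HSpace} (x : H) : hscal (RtoC 1) x = x.
Proof. destruct (hax H) as (_&_&_&_&_&c&_). apply c. Qed.
Lemma ax_scal_addv {H : HSpace} a (x y : H) : hscal a (hadd x y) = hadd (hscal a x) (hscal a y).
Proof. destruct (hax H) as (_&_&_&_&_&_&c&_). apply c. Qed.
Lemma ax_scal_adds {H : HSpace} a b (x : H) : hscal (Cplus a b) x = hadd (hscal a x) (hscal b x).
Proof. destruct (hax H) as (_&_&_&_&_&_&_&c&_). apply c. Qed.
Lemma ax_inner_add {H : HSpace} (x y z : H) : hinner (hadd x y) z = Cplus (hinner x z) (hinner y z).
Proof. destruct (hax H) as (_&_&_&_&_&_&_&_&c&_). apply c. Qed.
Lemma ax_inner_scal {H : HSpace} a (x y : H) : hinner (hscal a x) y = Cmult a (hinner x y).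
Proof. destruct (hax H) as (_&_&_&_&_&_&_&_&_&c&_). apply c. Qed.
Lemma ax_inner_conj {H : HSpace} (x y : H) : hinner y x = Cconj (hinner x y).
Proof. destruct (hax H) as (_&_&_&_&_&_&_&_&_&_&c&_). apply c. Qed.
Lemma ax_pos {H : HSpace} (x : H) : 0 <= Re (hinner x x) /\ Im (hinner x x) = 0.
Proof. destruct (hax H) as (_&_&_&_&_&_&_&_&_&_&_&c&_). apply c. Qed.
Lemma ax_def {H : HSpace} (x : H) : hinner x x = RtoC 0 -> x = hzero.
Proof. destruct (hax H) as (_&_&_&_&_&_&_&_&_&_&_&_&c&_). apply c. Qed.
Lemma ax_complete {H : HSpace} (u : nat -> H) :
     (forall eps, 0 < eps -> exists N, forall m n, (N <= m)%nat -> (N <= n)%nat ->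
        hnorm (hsub (u m) (u n)) < eps) ->
     exists l, is_lim_seq (fun n => hnorm (hsub (u n) l)) 0.
Proof. destruct (hax H) as (_&_&_&_&_&_&_&_&_&_&_&_&_&c). apply c. Qed.

Lemma add0r {H : HSpace} (x : H) : hadd x hzero = x.
Proof. rewrite ax_comm; apply ax_zero. Qed.

Lemma add_cancel {H : HSpace} (x y z : H) : hadd x y = hadd x z -> y = z.
Proof.
  intros E. rewrite <- (ax_zero y), <- (ax_zero z).
  rewrite <- (ax_opp x). rewrite (ax_comm x (hopp x)).
  rewrite <- !ax_assoc, E. reflexivity.
Qed.

Lemma add_eq0 {H : HSpace} (x y : H) : hadd x y = x -> y = hzero.
Proof. intros E. apply (add_cancel x). rewrite add0r. exact E. Qed.

Lemma scal0 {H : HSpace} (x : H) : hscal (RtoC 0) x = hzero.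
Proof.
  apply (add_eq0 (hscal (RtoC 0) x)). rewrite <- ax_scal_adds.
  f_equal. apply injective_projections; simpl; ring.
Qed.

Lemma scal_zero {H : HSpace} a : hscal a (@hzero H) = hzero.
Proof.
  apply (add_eq0 (hscal a hzero)). rewrite <- ax_scal_addv, add0r. reflexivity.
Qed.

Lemma opp_scal {H : HSpace} (x : H) : hopp x = hscal (RtoC (-1)) x.
Proof.
  apply (add_cancel x). rewrite ax_opp.
  rewrite <- (ax_scal1 x) at 1. rewrite <- ax_scal_adds. rewrite <- (scal0 x).
  f_equal. apply injective_projections; simpl; ring.
Qed.

Lemma inner0l {H : HSpace} (y : H) : hinner hzero y = RtoC 0.
Proof.
  rewrite <- (scal0 hzero), ax_inner_scal. apply injective_projections; simpl; ring.
Qed.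

Lemma inner0r {H : HSpace} (y : H) : hinner y hzero = RtoC 0.
Proof. rewrite ax_inner_conj, inner0l. apply injective_projections; simpl; ring. Qed.

Lemma inner_addr {H : HSpace} (x y z : H) : hinner x (hadd y z) = Cplus (hinner x y) (hinner x z).
Proof. rewrite ax_inner_conj, ax_inner_add, Cplus_conj, <- !ax_inner_conj. reflexivity. Qed.

Lemma inner_scalr {H : HSpace} a (x y : H) : hinner x (hscal a y) = Cmult (Cconj a) (hinner x y).
Proof. rewrite ax_inner_conj, ax_inner_scal, Cmult_conj, <- ax_inner_conj. reflexivity. Qed.

Lemma inner_oppl {H : HSpace} (x y : H) : hinner (hopp x) y = Copp (hinner x y).
Proof. rewrite opp_scal, ax_inner_scal. apply injective_projections; simpl; ring. Qed.

Lemma inner_oppr {H : HSpace} (x y : H) : hinner x (hopp y) = Copp (hinner x y).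
Proof. rewrite opp_scal, inner_scalr. apply injective_projections; simpl; ring. Qed.

Definition nsq {H : HSpace} (x : H) : R := Re (hinner x x).

Lemma nsq_ge0 {H : HSpace} (x : H) : 0 <= nsq x.
Proof. apply ax_pos. Qed.

Lemma inner_self {H : HSpace} (x : H) : hinner x x = RtoC (nsq x).
Proof.
  destruct (ax_pos x) as [_ Hi]. unfold nsq.
  apply injective_projections; simpl; auto.
Qed.

Lemma hnorm_sq {H : HSpace} (x : H) : hnorm x * hnorm x = nsq x.
Proof. unfold hnorm. apply sqrt_sqrt, nsq_ge0. Qed.

Lemma hnorm_ge0 {H : HSpace} (x : H) : 0 <= hnorm x.
Proof. apply sqrt_pos. Qed.

Lemma nsq0_eq {H : HSpace} (x : H) : nsq x = 0 -> x = hzero.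
Proof. intros E. apply ax_def. rewrite inner_self, E. reflexivity. Qed.

Lemma hnorm0_eq {H : HSpace} (x : H) : hnorm x = 0 -> x = hzero.
Proof. intros E. apply nsq0_eq. rewrite <- hnorm_sq, E. ring. Qed.

Lemma nsq_zero {H : HSpace} : nsq (@hzero H) = 0.
Proof. unfold nsq. rewrite inner0l. reflexivity. Qed.

Lemma hnorm_zero {H : HSpace} : hnorm (@hzero H) = 0.
Proof. unfold hnorm. fold (nsq (@hzero H)). rewrite nsq_zero. apply sqrt_0. Qed.

Lemma nsq_add {H : HSpace} (x y : H) :
  nsq (hadd x y) = nsq x + nsq y + 2 * Re (hinner x y).
Proof.
  unfold nsq. rewrite ax_inner_add, !inner_addr.
  rewrite (ax_inner_conj x y). unfold Cconj, Re; simpl; ring.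
Qed.

Lemma nsq_scal {H : HSpace} a (x : H) : nsq (hscal a x) = (Cmod a)^2 * nsq x.
Proof.
  unfold nsq. rewrite ax_inner_scal, inner_scalr, inner_self.
  rewrite Cmod2_alt. destruct a as [a1 a2]. simpl. ring.
Qed.

Lemma nsq_opp {H : HSpace} (x : H) : nsq (hopp x) = nsq x.
Proof. rewrite opp_scal, nsq_scal, Cmod_R. rewrite Rabs_left by lra. ring. Qed.

Lemma hnorm_scal {H : HSpace} a (x : H) : hnorm (hscal a x) = Cmod a * hnorm x.
Proof.
  unfold hnorm. fold (nsq (hscal a x)) (nsq x). rewrite nsq_scal, sqrt_mult.
  - rewrite sqrt_pow2; auto. apply Cmod_ge_0.
  - apply pow2_ge_0.
  - apply nsq_ge0.
Qed.

Lemma hnorm_opp {H : HSpace} (x : H) : hnorm (hopp x) = hnorm x.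
Proof. unfold hnorm. fold (nsq (hopp x)) (nsq x). rewrite nsq_opp. auto. Qed.

Lemma cs_re {H : HSpace} (x y : H) : (Re (hinner x y))^2 <= nsq x * nsq y.
Proof.
  assert (Q : forall t : R, 0 <= nsq x + 2 * t * Re (hinner x y) + t^2 * nsq y).
  { intros t. pose proof (nsq_ge0 (hadd x (hscal (RtoC t) y))) as P.
    rewrite nsq_add, nsq_scal, Cmod_R in P.
    rewrite inner_scalr in P.
    replace (Rabs t ^2) with (t^2) in P by (rewrite pow2_abs; auto).
    assert (E : forall z, Re (Cmult (Cconj (RtoC t)) z) = t * Re z)
      by (intros z; unfold Cconj, Re; simpl; ring).
    rewrite E in P. nra. }
  set (b := Re (hinner x y)) in *. set (a := nsq x) in *. set (c := nsq y) in *.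
  assert (Ha : 0 <= a) by apply nsq_ge0. assert (Hc : 0 <= c) by apply nsq_ge0.
  destruct (Rle_lt_or_eq_dec 0 c Hc) as [Hc'|Hc'].
  - pose proof (Q (- b / c)) as Q1.
    replace (a + 2 * (- b / c) * b + (- b / c) ^ 2 * c) with (a - b^2 / c) in Q1 by (field; lra).
    assert (b^2 / c <= a) by lra.
    apply (Rmult_le_compat_r c) in H0; [|lra]. unfold Rdiv in H0.
    rewrite Rmult_assoc, Rinv_l in H0 by lra. lra.
  - rewrite <- Hc'. rewrite Rmult_0_r.
    destruct (Req_dec b 0) as [Hb|Hb]. { rewrite Hb. lra. }
    exfalso. pose proof (Q (- (a + 1) / (2 * b))) as Q1. rewrite <- Hc' in Q1.
    replace (a + 2 * (- (a + 1) / (2 * b)) * b + (- (a + 1) / (2 * b)) ^ 2 * 0) with (-1) in Q1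
      by (field; auto). lra.
Qed.

Lemma cs_re_abs {H : HSpace} (x y : H) : Rabs (Re (hinner x y)) <= hnorm x * hnorm y.
Proof.
  rewrite <- sqrt_Rsqr_abs. unfold hnorm. fold (nsq x) (nsq y).
  rewrite <- sqrt_mult by apply nsq_ge0. apply sqrt_le_1_alt.
  pose proof (cs_re x y). unfold Rsqr. simpl in *. lra.
Qed.

Lemma hnorm_triangle {H : HSpace} (x y : H) : hnorm (hadd x y) <= hnorm x + hnorm y.
Proof.
  apply Rsqr_incr_0_var.
  - unfold Rsqr. rewrite hnorm_sq, nsq_add.
    replace ((hnorm x + hnorm y) * (hnorm x + hnorm y)) with
      (hnorm x * hnorm x + hnorm y * hnorm y + 2 * (hnorm x * hnorm y)) by ring.
    rewrite !hnorm_sq. pose proof (cs_re_abs x y). pose proof (Rle_abs (Re (hinner x y))). lra.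
  - pose proof (hnorm_ge0 x); pose proof (hnorm_ge0 y); lra.
Qed.

Lemma hsub_norm_sym {H : HSpace} (x y : H) : hnorm (hsub x y) = hnorm (hsub y x).
Proof.
  unfold hsub. rewrite <- hnorm_opp. f_equal.
  rewrite !opp_scal, ax_scal_addv, ax_scal_assoc.
  replace (Cmult (RtoC (-1)) (RtoC (-1))) with (RtoC 1) by (apply injective_projections; simpl; ring).
  rewrite ax_scal1, ax_comm. reflexivity.
Qed.

Lemma hsub_triangle {H : HSpace} (x y z : H) : hnorm (hsub x z) <= hnorm (hsub x y) + hnorm (hsub y z).
Proof.
  replace (hsub x z) with (hadd (hsub x y) (hsub y z)). apply hnorm_triangle.
  unfold hsub. rewrite <- ax_assoc. f_equal. rewrite ax_assoc. rewrite (ax_comm (hopp y) y), ax_opp, ax_zero. auto.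
Qed.

Lemma hsub_self {H : HSpace} (x : H) : hsub x x = hzero.
Proof. apply ax_opp. Qed.

Lemma hsub_zero {H : HSpace} (x : H) : hsub x hzero = x.
Proof. unfold hsub. rewrite opp_scal, scal_zero, add0r. auto. Qed.

Lemma hnorm_sub_eq {H : HSpace} (x y : H) : hnorm (hsub x y) = 0 -> x = y.
Proof.
  intros E. apply hnorm0_eq in E. unfold hsub in E.
  apply (add_cancel (hopp y)). rewrite (ax_comm (hopp y) y), ax_opp, ax_comm. auto.
Qed.

Fixpoint csum (n : nat) (f : nat -> C) : C :=
  match n with O => RtoC 0 | S n' => Cplus (csum n' f) (f n') end.
Fixpoint rsum (n : nat) (f : nat -> R) : R :=
  match n with O => 0 | S n' => rsum n' f + f n' end.

Lemma csum_ext n f g : (forall k, (k < n)%nat -> f k = g k) -> csum n f = csum n g.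
Proof. induction n; simpl; intros; auto. rewrite IHn by auto. rewrite H by auto. auto. Qed.
Lemma rsum_ext n f g : (forall k, (k < n)%nat -> f k = g k) -> rsum n f = rsum n g.
Proof. induction n; simpl; intros; auto. rewrite IHn by auto. rewrite H by auto. auto. Qed.
Lemma rsum_le n f g : (forall k, (k < n)%nat -> f k <= g k) -> rsum n f <= rsum n g.
Proof. induction n; simpl; intros; [lra|]. pose proof (IHn (fun k h => H k (Nat.lt_lt_succ_r _ _ h))). pose proof (H n (Nat.lt_succ_diag_r n)). lra. Qed.
Lemma rsum_ge0 n f : (forall k, (k < n)%nat -> 0 <= f k) -> 0 <= rsum n f.
Proof. intros. replace 0 with (rsum n (fun _ => 0)). apply rsum_le; auto. induction n; simpl; auto. rewrite IHn; [ring|]. intros; apply H; lia. Qed.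
Lemma rsum_const n a : rsum n (fun _ => a) = INR n * a.
Proof. induction n; simpl rsum; [simpl; ring|]. rewrite IHn, S_INR. ring. Qed.
Lemma rsum_scal n a f : rsum n (fun k => a * f k) = a * rsum n f.
Proof. induction n; simpl; [ring|]. rewrite IHn; ring. Qed.
Lemma rsum_plus n f g : rsum n (fun k => f k + g k) = rsum n f + rsum n g.
Proof. induction n; simpl; [ring|]. rewrite IHn; ring. Qed.
Lemma re_csum n f : Re (csum n f) = rsum n (fun k => Re (f k)).
Proof. induction n; simpl; auto. rewrite <- IHn. reflexivity. Qed.
Lemma csum_plus n f g : csum n (fun k => Cplus (f k) (g k)) = Cplus (csum n f) (csum n g).
Proof. induction n; simpl. apply injective_projections; simpl; ring. rewrite IHn. ring. Qed.
Lemma csum_scal n a f : csum n (fun k => Cmult a (f k)) = Cmult a (csum n f).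
Proof. induction n; simpl. apply injective_projections; simpl; ring. rewrite IHn. ring. Qed.
Lemma csum_conj n f : Cconj (csum n f) = csum n (fun k => Cconj (f k)).
Proof. induction n; simpl. apply injective_projections; simpl; ring. rewrite Cplus_conj, IHn. auto. Qed.
Lemma csum_zero n : csum n (fun _ => RtoC 0) = RtoC 0.
Proof. induction n; simpl; auto. rewrite IHn. apply injective_projections; simpl; ring. Qed.
Lemma csum_delta n (c : nat -> C) j :
  csum n (fun k => Cmult (c k) (if Nat.eqb k j then RtoC 1 else RtoC 0)) =
  if Nat.ltb j n then c j else RtoC 0.
Proof.
  induction n; simpl; auto. rewrite IHn.
  destruct (Nat.eqb n j) eqn:E.
  - apply Nat.eqb_eq in E; subst. rewrite (proj2 (Nat.ltb_ge j j)) by lia.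
    rewrite (proj2 (Nat.ltb_lt j (S j))) by lia. apply injective_projections; simpl; ring.
  - apply Nat.eqb_neq in E.
    destruct (Nat.ltb j n) eqn:E1; destruct (Nat.ltb j (S n)) eqn:E2;
      rewrite ?Nat.ltb_lt, ?Nat.ltb_ge in *; try lia; apply injective_projections; simpl; ring.
Qed.
Lemma csum_split n (f : nat -> C) m : (m <= n)%nat ->
  csum n f = Cplus (csum m f) (csum n (fun k => if Nat.ltb k m then RtoC 0 else f k)).
Proof.
  induction n; intros Hm.
  - assert (m = 0%nat) by lia; subst. simpl. apply injective_projections; simpl; ring.
  - destruct (Nat.eq_dec m (S n)).
    + subst. simpl. rewrite (csum_ext n (fun k => if Nat.ltb k (S n) then RtoC 0 else f k) (fun _ => RtoC 0)).
      rewrite csum_zero. rewrite (proj2 (Nat.ltb_lt n (S n))) by lia.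
      apply injective_projections; simpl; ring.
      intros k Hk. rewrite (proj2 (Nat.ltb_lt k (S n))) by lia. auto.
    + simpl. rewrite IHn by lia. rewrite (proj2 (Nat.ltb_ge n m)) by lia. ring.
Qed.

Lemma lincomb_ext {H : HSpace} n c d (v : nat -> H) :
  (forall k, (k < n)%nat -> c k = d k) -> lincomb n c v = lincomb n d v.
Proof. induction n; simpl; intros; auto. rewrite IHn by auto. rewrite H0 by auto. auto. Qed.
Lemma lincomb_extv {H : HSpace} n c (v u : nat -> H) :
  (forall k, (k < n)%nat -> v k = u k) -> lincomb n c v = lincomb n c u.
Proof. induction n; simpl; intros; auto. rewrite IHn by auto. rewrite H0 by auto. auto. Qed.

Lemma lincomb_zero {H : HSpace} n (v : nat -> H) : lincomb n (fun _ => RtoC 0) v = hzero.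
Proof. induction n; simpl; auto. rewrite IHn, scal0, ax_zero. auto. Qed.

Lemma hadd_swap {H : HSpace} (a b c d : H) : hadd (hadd a b) (hadd c d) = hadd (hadd a c) (hadd b d).
Proof.
  rewrite <- !ax_assoc. f_equal. rewrite !ax_assoc. f_equal. apply ax_comm.
Qed.

Lemma lincomb_add {H : HSpace} n c d (v : nat -> H) :
  hadd (lincomb n c v) (lincomb n d v) = lincomb n (fun k => Cplus (c k) (d k)) v.
Proof.
  induction n; simpl. apply ax_zero.
  rewrite hadd_swap, IHn, ax_scal_adds. auto.
Qed.

Lemma lincomb_scal {H : HSpace} n a c (v : nat -> H) :
  hscal a (lincomb n c v) = lincomb n (fun k => Cmult a (c k)) v.
Proof.
  induction n; simpl. apply scal_zero.
  rewrite ax_scal_addv, IHn, ax_scal_assoc. auto.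
Qed.

Lemma lincomb_opp {H : HSpace} n c (v : nat -> H) :
  hopp (lincomb n c v) = lincomb n (fun k => Copp (c k)) v.
Proof.
  rewrite opp_scal, lincomb_scal. apply lincomb_ext. intros. apply injective_projections; simpl; ring.
Qed.

Lemma lincomb_sub {H : HSpace} n c d (v : nat -> H) :
  hsub (lincomb n c v) (lincomb n d v) = lincomb n (fun k => Cminus (c k) (d k)) v.
Proof. unfold hsub. rewrite lincomb_opp, lincomb_add. auto. Qed.

Lemma lincomb_linear {H1 H2 : HSpace} (F : H1 -> H2) n c (v : nat -> H1) :
  is_linear F -> F (lincomb n c v) = lincomb n c (fun k => F (v k)).
Proof.
  intros [L1 L2]. induction n; simpl.
  - rewrite <- (scal0 hzero), L2, scal0. auto.
  - rewrite L1, L2, IHn. auto.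
Qed.

Lemma inner_lincomb_l {H : HSpace} n c (v : nat -> H) y :
  hinner (lincomb n c v) y = csum n (fun k => Cmult (c k) (hinner (v k) y)).
Proof. induction n; simpl. apply inner0l. rewrite ax_inner_add, IHn, ax_inner_scal. auto. Qed.

Lemma inner_lincomb_r {H : HSpace} n c (v : nat -> H) y :
  hinner y (lincomb n c v) = csum n (fun k => Cmult (Cconj (c k)) (hinner y (v k))).
Proof. induction n; simpl. apply inner0r. rewrite inner_addr, IHn, inner_scalr. auto. Qed.

Definition orthonormal {H : HSpace} (v : nat -> H) : Prop :=
  forall i j, hinner (v i) (v j) = if Nat.eqb i j then RtoC 1 else RtoC 0.

Lemma inner_lincomb_on {H : HSpace} n c (v : nat -> H) j : orthonormal v ->
  hinner (lincomb n c v) (v j) = if Nat.ltb j n then c j else RtoC 0.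
Proof.
  intros O. rewrite inner_lincomb_l. rewrite <- csum_delta. apply csum_ext. intros. rewrite O. auto.
Qed.

Lemma cmod2_re (c : C) : Re (Cmult c (Cconj c)) = (Cmod c)^2.
Proof. rewrite Cmod2_alt. destruct c; unfold Cconj, Re, Im; simpl. ring. Qed.

Lemma nsq_lincomb {H : HSpace} n c (v : nat -> H) : orthonormal v ->
  nsq (lincomb n c v) = rsum n (fun k => (Cmod (c k))^2).
Proof.
  intros O. unfold nsq. rewrite inner_lincomb_l, re_csum. apply rsum_ext. intros k Hk.
  rewrite ax_inner_conj, inner_lincomb_on by auto. rewrite (proj2 (Nat.ltb_lt k n)) by auto.
  apply cmod2_re.
Qed.

Lemma nsq_sub {H : HSpace} (x y : H) : nsq (hsub x y) = nsq x + nsq y - 2 * Re (hinner x y).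
Proof. unfold hsub. rewrite nsq_add, nsq_opp, inner_oppr. unfold Re; simpl. ring. Qed.

Definition coefs {H : HSpace} (x : H) (v : nat -> H) : nat -> C := fun k => hinner x (v k).

Lemma bessel_eq {H : HSpace} n (v : nat -> H) x : orthonormal v ->
  nsq (hsub x (lincomb n (coefs x v) v)) = nsq x - rsum n (fun k => (Cmod (coefs x v k))^2).
Proof.
  intros O. rewrite nsq_sub, nsq_lincomb by auto.
  rewrite inner_lincomb_r, re_csum.
  rewrite (rsum_ext n (fun k => Re (Cmult (Cconj (coefs x v k)) (hinner x (v k)))) (fun k => (Cmod (coefs x v k))^2)). ring.
  intros k _. unfold coefs. rewrite Cmult_comm. apply cmod2_re.
Qed.

Lemma bessel {H : HSpace} n (v : nat -> H) x : orthonormal v ->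
  rsum n (fun k => (Cmod (coefs x v k))^2) <= nsq x.
Proof. intros O. pose proof (nsq_ge0 (hsub x (lincomb n (coefs x v) v))). rewrite bessel_eq in H0; auto. lra. Qed.

Lemma coef_bound {H : HSpace} (v : nat -> H) x k : orthonormal v -> Cmod (hinner x (v k)) <= hnorm x.
Proof.
  intros O. pose proof (bessel (S k) v x O). simpl in H0.
  pose proof (rsum_ge0 k (fun k => (Cmod (coefs x v k))^2) (fun _ _ => pow2_ge_0 _)).
  unfold coefs in *. apply Rsqr_incr_0_var. unfold Rsqr. rewrite hnorm_sq. simpl in *. lra.
  apply hnorm_ge0.
Qed.

Lemma hnorm_lincomb_le {H : HSpace} n c (v : nat -> H) :
  hnorm (lincomb n c v) <= rsum n (fun k => Cmod (c k) * hnorm (v k)).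
Proof.
  induction n; simpl. rewrite hnorm_zero. lra.
  eapply Rle_trans. apply hnorm_triangle. rewrite hnorm_scal. lra.
Qed.

Definition orth_n {H : HSpace} (n : nat) (v : nat -> H) : Prop :=
  forall i j, (i < n)%nat -> (j < n)%nat ->
    hinner (v i) (v j) = if Nat.eqb i j then RtoC 1 else RtoC 0.

Lemma inner_lincomb_on_n {H : HSpace} n c (v : nat -> H) j : orth_n n v -> (j < n)%nat ->
  hinner (lincomb n c v) (v j) = c j.
Proof.
  intros O Hj. rewrite inner_lincomb_l.
  transitivity (if Nat.ltb j n then c j else RtoC 0).
  - rewrite <- csum_delta. apply csum_ext. intros. rewrite O; auto.
  - rewrite (proj2 (Nat.ltb_lt j n)); auto.
Qed.

Definition gs_next {H : HSpace} (Hinf : infinite_dim H) (n : nat) (f : nat -> H) : H :=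
  let x := proj1_sig (constructive_indefinite_description _ (Hinf n f)) in
  let y := hsub x (lincomb n (coefs x f) f) in
  hscal (RtoC (/ hnorm y)) y.

Lemma gs_next_spec {H : HSpace} (Hinf : infinite_dim H) n (f : nat -> H) : orth_n n f ->
  hinner (gs_next Hinf n f) (gs_next Hinf n f) = RtoC 1 /\
  forall j, (j < n)%nat -> hinner (gs_next Hinf n f) (f j) = RtoC 0.
Proof.
  intros O. unfold gs_next.
  destruct (constructive_indefinite_description _ (Hinf n f)) as [x Hx]. simpl.
  set (y := hsub x (lincomb n (coefs x f) f)).
  assert (Hy : hnorm y <> 0).
  { intros E. apply hnorm_sub_eq in E. apply Hx. eauto. }
  assert (Hy0 : 0 < hnorm y) by (pose proof (hnorm_ge0 y); lra).
  split.
  - rewrite inner_self. f_equal. rewrite nsq_scal, Cmod_R, <- hnorm_sq.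
    rewrite Rabs_right by (left; apply Rinv_0_lt_compat; auto). field; auto.
  - intros j Hj. rewrite ax_inner_scal. unfold y, hsub.
    rewrite ax_inner_add, inner_oppl, inner_lincomb_on_n by auto.
    unfold coefs. apply injective_projections; simpl; ring.
Qed.

Fixpoint gs {H : HSpace} (Hinf : infinite_dim H) (n : nat) : nat -> H :=
  match n with
  | O => fun _ => hzero
  | S n' => fun k => if Nat.ltb k n' then gs Hinf n' k else gs_next Hinf n' (gs Hinf n')
  end.

Lemma gs_orth {H : HSpace} (Hinf : infinite_dim H) n : orth_n n (gs Hinf n).
Proof.
  induction n; intros i j Hi Hj; [lia|]. simpl.
  destruct (gs_next_spec Hinf n (gs Hinf n) IHn) as [N1 N2].
  destruct (Nat.ltb i n) eqn:Ei; destruct (Nat.ltb j n) eqn:Ej;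
    rewrite ?Nat.ltb_lt, ?Nat.ltb_ge in *.
  - apply IHn; auto.
  - rewrite ax_inner_conj, N2 by auto. rewrite (proj2 (Nat.eqb_neq i j)) by lia.
    apply injective_projections; simpl; ring.
  - rewrite N2 by auto. rewrite (proj2 (Nat.eqb_neq i j)) by lia. auto.
  - assert (i = j) by lia. subst. rewrite Nat.eqb_refl. auto.
Qed.

Lemma gs_stable {H : HSpace} (Hinf : infinite_dim H) n k : (k < n)%nat ->
  gs Hinf n k = gs Hinf (S k) k.
Proof.
  induction n; intros Hk; [lia|].
  destruct (Nat.eq_dec k n). { subst; auto. }
  simpl. rewrite (proj2 (Nat.ltb_lt k n)) by lia. apply IHn. lia.
Qed.

Definition onb {H : HSpace} (Hinf : infinite_dim H) (k : nat) : H := gs Hinf (S k) k.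

Lemma onb_orthonormal {H : HSpace} (Hinf : infinite_dim H) : orthonormal (onb Hinf).
Proof.
  intros i j. unfold onb. rewrite <- (gs_stable Hinf (S (i + j)) i) by lia.
  rewrite <- (gs_stable Hinf (S (i + j)) j) by lia. apply gs_orth; lia.
Qed.

Lemma pow_decr (w : R) n m : 0 <= w <= 1 -> (n <= m)%nat -> w ^ m <= w ^ n.
Proof.
  intros Hw Hnm. replace m with (n + (m - n))%nat by lia. rewrite pow_add.
  pose proof (pow_le w n (proj1 Hw)). assert (w ^ (m - n) <= 1) by (rewrite <- (pow1 (m - n)); apply pow_incr; lra).
  pose proof (pow_le w (m-n) (proj1 Hw)). nra.
Qed.

Definition lim_H {H : HSpace} (u : nat -> H) (l : H) : Prop :=
  is_lim_seq (fun n => hnorm (hsub (u n) l)) 0.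

Lemma lim_bound_gen (a : nat -> R) (B c : R) N :
  is_lim_seq a 0 -> (forall n, (N <= n)%nat -> c <= a n + B) -> c <= B.
Proof.
  intros La Hb. apply (is_lim_seq_incr_n a N) in La.
  pose proof (is_lim_seq_plus' _ _ _ B La (is_lim_seq_const B)) as L2.
  pose proof (is_lim_seq_le (fun _ => c) _ c _ (fun n => Hb (n + N)%nat ltac:(lia)) (is_lim_seq_const c) L2).
  simpl in H. lra.
Qed.

Lemma lim_plus0 (u v : nat -> R) : is_lim_seq u 0 -> is_lim_seq v 0 ->
  is_lim_seq (fun n => u n + v n) 0.
Proof. intros A B. replace (Finite 0) with (Finite (0 + 0)) by (f_equal; ring). apply is_lim_seq_plus'; auto. Qed.

Lemma lim_H_bound {H : HSpace} (u : nat -> H) l z B N :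
  lim_H u l -> (forall n, (N <= n)%nat -> hnorm (hsub (u n) z) <= B) -> hnorm (hsub l z) <= B.
Proof.
  intros L Hb. apply (lim_bound_gen _ B _ N L). intros n Hn.
  eapply Rle_trans. apply (hsub_triangle l (u n) z). rewrite hsub_norm_sym. specialize (Hb n Hn). lra.
Qed.

Lemma lim_H_unique {H : HSpace} (u : nat -> H) l l' : lim_H u l -> lim_H u l' -> l = l'.
Proof.
  intros L1 L2. apply hnorm_sub_eq. apply Rle_antisym; [|apply hnorm_ge0].
  eapply (lim_bound_gen _ 0 _ 0%nat (lim_plus0 _ _ L1 L2)).
  intros n _. eapply Rle_trans. apply (hsub_triangle l (u n) l'). rewrite (hsub_norm_sym l). lra.
Qed.

Lemma lim_H_ev {H : HSpace} (u : nat -> H) c N : (forall n, (N <= n)%nat -> u n = c) -> lim_H u c.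
Proof.
  intros E. unfold lim_H. apply (is_lim_seq_incr_n _ N).
  apply is_lim_seq_ext with (fun _ => 0). intros n. rewrite E by lia. rewrite hsub_self, hnorm_zero. auto.
  apply is_lim_seq_const.
Qed.

Lemma opp_add {H : HSpace} (a b : H) : hopp (hadd a b) = hadd (hopp a) (hopp b).
Proof. rewrite !opp_scal. apply ax_scal_addv. Qed.

Lemma hsub_add {H : HSpace} (a b c d : H) : hsub (hadd a b) (hadd c d) = hadd (hsub a c) (hsub b d).
Proof. unfold hsub. rewrite opp_add. apply hadd_swap. Qed.

Lemma hsub_scal {H : HSpace} k (a b : H) : hsub (hscal k a) (hscal k b) = hscal k (hsub a b).
Proof. unfold hsub. rewrite ax_scal_addv, !opp_scal, !ax_scal_assoc. f_equal. f_equal. apply Cmult_comm. Qed.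

Lemma lim_H_add {H : HSpace} (u v : nat -> H) l l' : lim_H u l -> lim_H v l' ->
  lim_H (fun n => hadd (u n) (v n)) (hadd l l').
Proof.
  intros L1 L2. unfold lim_H.
  apply is_lim_seq_le_le with (fun _ => 0) (fun n => hnorm (hsub (u n) l) + hnorm (hsub (v n) l')).
  - intros n. split. apply hnorm_ge0. rewrite hsub_add. apply hnorm_triangle.
  - apply is_lim_seq_const.
  - replace (Finite 0) with (Finite (0 + 0)) by (f_equal; ring). apply is_lim_seq_plus'; auto.
Qed.

Lemma lim_H_scal {H : HSpace} (u : nat -> H) l k : lim_H u l ->
  lim_H (fun n => hscal k (u n)) (hscal k l).
Proof.
  intros L. unfold lim_H.
  apply is_lim_seq_ext with (fun n => Cmod k * hnorm (hsub (u n) l)).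
  intros n. rewrite hsub_scal, hnorm_scal. auto.
  replace (Finite 0) with (Rbar_mult (Cmod k) 0) by (simpl; f_equal; ring).
  apply is_lim_seq_scal_l. auto.
Qed.


Definition dcoef {H : HSpace} (w : R) (e : nat -> H) (x : H) : nat -> C :=
  fun k => Cmult (RtoC (w ^ k)) (hinner x (e k)).

Definition Sn {H : HSpace} (w : R) (e : nat -> H) (n : nat) (x : H) : H :=
  lincomb n (dcoef w e x) e.

Lemma lincomb_trunc {H : HSpace} n m c (v : nat -> H) : (n <= m)%nat ->
  lincomb n c v = lincomb m (fun k => if Nat.ltb k n then c k else RtoC 0) v.
Proof.
  induction m; intros Hm.
  - assert (n = 0%nat) by lia. subst. auto.
  - destruct (Nat.eq_dec n (S m)).
    + subst. apply lincomb_ext. intros k Hk. rewrite (proj2 (Nat.ltb_lt k (S m))); auto.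
    + simpl. rewrite <- IHm by lia. rewrite (proj2 (Nat.ltb_ge m n)) by lia. rewrite scal0, add0r. auto.
Qed.

Lemma Sn_diff {H : HSpace} w (e : nat -> H) x n m : 0 < w < 1 -> orthonormal e -> (n <= m)%nat ->
  hnorm (hsub (Sn w e m x) (Sn w e n x)) <= w ^ n * hnorm x.
Proof.
  intros Hw O Hnm. unfold Sn. rewrite (lincomb_trunc n m) by auto. rewrite lincomb_sub.
  apply Rsqr_incr_0_var; [|apply Rmult_le_pos; [apply pow_le; lra|apply hnorm_ge0]].
  unfold Rsqr. rewrite hnorm_sq, nsq_lincomb by auto.
  replace (w ^ n * hnorm x * (w ^ n * hnorm x)) with (w^n * w^n * (hnorm x * hnorm x)) by ring.
  rewrite hnorm_sq. eapply Rle_trans; [|apply Rmult_le_compat_l; [|apply (bessel m e x O)]].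
  2: { apply Rmult_le_pos; apply pow_le; lra. }
  rewrite <- rsum_scal. apply rsum_le. intros k Hk.
  destruct (Nat.ltb k n) eqn:E.
  - replace (Cminus (dcoef w e x k) (dcoef w e x k)) with (RtoC 0) by (apply injective_projections; simpl; ring).
    rewrite Cmod_0. simpl. rewrite Rmult_0_l. apply Rmult_le_pos; [apply Rmult_le_pos; apply pow_le; lra|apply pow2_ge_0].
  - apply Nat.ltb_ge in E.
    replace (Cminus (dcoef w e x k) (RtoC 0)) with (dcoef w e x k) by (apply injective_projections; simpl; ring).
    unfold dcoef, coefs. rewrite Cmod_mult, Cmod_R, Rabs_right by (apply Rle_ge, pow_le; lra).
    assert (w ^ k <= w ^ n) by (apply pow_decr; lra || auto).
    assert (0 <= w^k) by (apply pow_le; lra).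
    pose proof (Cmod_ge_0 (hinner x (e k))).
    replace ((w ^ k * Cmod (hinner x (e k))) ^ 2) with (w^k * w^k * (Cmod (hinner x (e k)))^2) by ring.
    apply Rmult_le_compat_r. apply pow2_ge_0. apply Rmult_le_compat; lra.
Qed.

Lemma Sn_cauchy {H : HSpace} w (e : nat -> H) x : 0 < w < 1 -> orthonormal e ->
  forall eps, 0 < eps -> exists N, forall m n, (N <= m)%nat -> (N <= n)%nat ->
    hnorm (hsub (Sn w e m x) (Sn w e n x)) < eps.
Proof.
  intros Hw O eps He.
  pose proof (hnorm_ge0 x) as Hx.
  destruct (pow_lt_1_zero w ltac:(rewrite Rabs_right; lra) (eps / (hnorm x + 1)) ltac:(apply Rdiv_lt_0_compat; lra)) as [N HN].
  exists N. intros m n Hm Hn.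
  assert (Key : forall a b, (N <= a)%nat -> (a <= b)%nat -> hnorm (hsub (Sn w e b x) (Sn w e a x)) < eps).
  { intros a b Ha Hab. eapply Rle_lt_trans. apply Sn_diff; auto.
    specialize (HN a Ha). rewrite Rabs_right in HN by (apply Rle_ge, pow_le; lra).
    apply (Rmult_lt_compat_r (hnorm x + 1)) in HN; [|lra].
    unfold Rdiv in HN. rewrite Rmult_assoc, Rinv_l in HN by lra.
    pose proof (pow_le w a ltac:(lra)). nra. }
  destruct (le_ge_dec n m).
  - apply Key; auto.
  - rewrite hsub_norm_sym. apply Key; lia.
Qed.

Definition Aop {H : HSpace} w (e : nat -> H) (Hw : 0 < w < 1) (O : orthonormal e) (x : H) : H :=
  proj1_sig (constructive_indefinite_description _
    (ax_complete (fun n => Sn w e n x) (Sn_cauchy w e x Hw O))).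

Lemma Aop_lim {H : HSpace} w (e : nat -> H) Hw O x : lim_H (fun n => Sn w e n x) (Aop w e Hw O x).
Proof. unfold Aop. destruct (constructive_indefinite_description _ _). simpl. auto. Qed.

Lemma Sn_add {H : HSpace} w (e : nat -> H) n x y :
  Sn w e n (hadd x y) = hadd (Sn w e n x) (Sn w e n y).
Proof.
  unfold Sn. rewrite lincomb_add. apply lincomb_ext. intros. unfold dcoef. rewrite ax_inner_add. ring.
Qed.

Lemma Sn_scal {H : HSpace} w (e : nat -> H) n a x :
  Sn w e n (hscal a x) = hscal a (Sn w e n x).
Proof.
  unfold Sn. rewrite lincomb_scal. apply lincomb_ext. intros. unfold dcoef. rewrite ax_inner_scal. ring.
Qed.

Lemma Sn_bound {H : HSpace} w (e : nat -> H) n x : 0 < w < 1 -> orthonormal e ->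
  hnorm (Sn w e n x) <= hnorm x.
Proof.
  intros Hw O. apply Rsqr_incr_0_var; [|apply hnorm_ge0]. unfold Rsqr. rewrite !hnorm_sq.
  unfold Sn. rewrite nsq_lincomb by auto. eapply Rle_trans; [|apply (bessel n e x O)].
  apply rsum_le. intros k _. unfold dcoef, coefs. rewrite Cmod_mult, Cmod_R, Rabs_right by (apply Rle_ge, pow_le; lra).
  assert (w ^ k <= 1) by (rewrite <- (pow1 k); apply pow_incr; lra).
  pose proof (pow_le w k ltac:(lra)). pose proof (Cmod_ge_0 (hinner x (e k))).
  replace ((w ^ k * Cmod (hinner x (e k))) ^ 2) with ((w^k)^2 * (Cmod (hinner x (e k)))^2) by ring.
  assert ((w^k)^2 <= 1) by nra. pose proof (pow2_ge_0 (Cmod (hinner x (e k)))). nra.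
Qed.

Lemma lim_H_ext {H : HSpace} (u v : nat -> H) l : (forall n, u n = v n) -> lim_H u l -> lim_H v l.
Proof. intros E L. unfold lim_H. apply is_lim_seq_ext with (fun n => hnorm (hsub (u n) l)); auto. intros; rewrite E; auto. Qed.

Lemma Aop_add {H : HSpace} w (e : nat -> H) Hw O x y :
  Aop w e Hw O (hadd x y) = hadd (Aop w e Hw O x) (Aop w e Hw O y).
Proof.
  apply (lim_H_unique (fun n => Sn w e n (hadd x y))). apply Aop_lim.
  apply lim_H_ext with (fun n => hadd (Sn w e n x) (Sn w e n y)).
  intros; rewrite Sn_add; auto. apply lim_H_add; apply Aop_lim.
Qed.

Lemma Aop_scal {H : HSpace} w (e : nat -> H) Hw O a x :
  Aop w e Hw O (hscal a x) = hscal a (Aop w e Hw O x).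
Proof.
  apply (lim_H_unique (fun n => Sn w e n (hscal a x))). apply Aop_lim.
  apply lim_H_ext with (fun n => hscal a (Sn w e n x)).
  intros; rewrite Sn_scal; auto. apply lim_H_scal; apply Aop_lim.
Qed.

Lemma Aop_bound {H : HSpace} w (e : nat -> H) Hw O x : hnorm (Aop w e Hw O x) <= hnorm x.
Proof.
  rewrite <- (hsub_zero (Aop w e Hw O x)). apply (lim_H_bound _ _ _ _ 0%nat (Aop_lim w e Hw O x)).
  intros n _. rewrite hsub_zero. apply Sn_bound; auto.
Qed.

Lemma Aop_tail {H : HSpace} w (e : nat -> H) Hw O x n :
  hnorm (hsub (Aop w e Hw O x) (Sn w e n x)) <= w ^ n * hnorm x.
Proof.
  apply (lim_H_bound _ _ _ _ n (Aop_lim w e Hw O x)).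
  intros m Hm. apply Sn_diff; auto.
Qed.

Lemma lincomb_single {H : HSpace} n a j (v : nat -> H) : (j < n)%nat ->
  lincomb n (fun k => if Nat.eqb k j then a else RtoC 0) v = hscal a (v j).
Proof.
  induction n; intros Hj; [lia|]. simpl.
  destruct (Nat.eq_dec j n).
  - subst. rewrite Nat.eqb_refl. rewrite (lincomb_ext n _ (fun _ => RtoC 0)). rewrite lincomb_zero, ax_zero. auto.
    intros k Hk. rewrite (proj2 (Nat.eqb_neq k n)) by lia. auto.
  - rewrite IHn by lia. rewrite (proj2 (Nat.eqb_neq n j)) by lia. rewrite scal0, add0r. auto.
Qed.

Lemma Aop_basis {H : HSpace} w (e : nat -> H) Hw O j :
  Aop w e Hw O (e j) = hscal (RtoC (w ^ j)) (e j).
Proof.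
  apply (lim_H_unique (fun n => Sn w e n (e j))). apply Aop_lim.
  apply (lim_H_ev _ _ (S j)). intros n Hn. unfold Sn.
  rewrite <- (lincomb_single n _ j) by lia. apply lincomb_ext. intros k _. unfold dcoef. rewrite O.
  destruct (Nat.eqb j k) eqn:E; destruct (Nat.eqb k j) eqn:E2;
    rewrite ?Nat.eqb_eq, ?Nat.eqb_neq in *; try (subst; lia).
  - subst. apply injective_projections; simpl; ring.
  - apply injective_projections; simpl; ring.
Qed.

Lemma inner_hsub_l {H : HSpace} (a b c : H) : hinner (hsub a b) c = Cminus (hinner a c) (hinner b c).
Proof. unfold hsub. rewrite ax_inner_add, inner_oppl. auto. Qed.

Lemma Aop_inner {H : HSpace} w (e : nat -> H) Hw O x i :
  hinner (Aop w e Hw O x) (e i) = Cmult (RtoC (w ^ i)) (hinner x (e i)).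
Proof.
  set (d := Cminus (hinner (Aop w e Hw O x) (e i)) (Cmult (RtoC (w ^ i)) (hinner x (e i)))).
  assert (Cmod d <= 0).
  { apply (lim_bound_gen _ 0 _ (S i) (Aop_lim w e Hw O x)). intros n Hn.
    rewrite Rplus_0_r, hsub_norm_sym.
    replace d with (hinner (hsub (Aop w e Hw O x) (Sn w e n x)) (e i)).
    apply coef_bound; auto.
    unfold d. rewrite inner_hsub_l. unfold Sn. rewrite inner_lincomb_on by auto.
    rewrite (proj2 (Nat.ltb_lt i n)) by lia. auto. }
  pose proof (Cmod_ge_0 d). assert (Cmod d = 0) by lra. apply Cmod_eq_0 in H2.
  unfold d in H2.
  match goal with |- ?a = ?b => replace a with (Cplus (Cminus a b) b) by ring end.
  rewrite H2. ring.
Qed.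

Lemma lub_nonneg (E : R -> Prop) : (exists x, E x) -> (forall x, E x -> 0 <= x) -> 0 <= real (Lub_Rbar E).
Proof.
  intros [x0 Hx0] HM. destruct (Lub_Rbar_correct E) as [Hub Hl].
  assert (H2 : Rbar_le x0 (Lub_Rbar E)) by (apply Hub; auto).
  specialize (HM x0 Hx0).
  destruct (Lub_Rbar E); simpl in *; try contradiction; lra.
Qed.

Lemma opnorm_nonneg {H1 H2 : HSpace} (f : H1 -> H2) : 0 <= opnorm f.
Proof.
  unfold opnorm. apply lub_nonneg.
  - exists (hnorm (f hzero)). exists hzero. split; auto. rewrite hnorm_zero; lra.
  - intros r [x [_ ->]]. apply hnorm_ge0.
Qed.

Lemma opnorm_le {H1 H2 : HSpace} (f : H1 -> H2) M :
  (forall x, hnorm x <= 1 -> hnorm (f x) <= M) -> opnorm f <= M.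
Proof.
  intros HM. unfold opnorm. apply lub_le.
  - intros r [x [Hx ->]]. auto.
  - exists (hnorm (f hzero)). exists hzero. split; auto. rewrite hnorm_zero; lra.
Qed.

Lemma opnorm_ge {H1 H2 : HSpace} (f : H1 -> H2) x :
  is_bounded f -> hnorm x <= 1 -> hnorm (f x) <= opnorm f.
Proof.
  intros [c [Hc Hb]] Hx. unfold opnorm. apply (lub_ge _ c).
  - intros r [y [Hy ->]]. eapply Rle_trans. apply Hb. pose proof (hnorm_ge0 y). nra.
  - eauto.
Qed.

Lemma lin_zero {H1 H2 : HSpace} (f : H1 -> H2) : is_linear f -> f hzero = hzero.
Proof. intros [_ L2]. rewrite <- (scal0 hzero), L2, scal0. auto. Qed.

Lemma opnorm_apply {H1 H2 : HSpace} (f : H1 -> H2) x :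
  is_linear f -> is_bounded f -> hnorm (f x) <= opnorm f * hnorm x.
Proof.
  intros L B. destruct (Req_dec (hnorm x) 0) as [E|E].
  - apply hnorm0_eq in E. subst. rewrite lin_zero by auto. rewrite !hnorm_zero. lra.
  - assert (Hx : 0 < hnorm x) by (pose proof (hnorm_ge0 x); lra).
    set (y := hscal (RtoC (/ hnorm x)) x).
    assert (Hy : hnorm y = 1).
    { unfold y. rewrite hnorm_scal, Cmod_R, Rabs_right by (left; apply Rinv_0_lt_compat; auto). field; lra. }
    pose proof (opnorm_ge f y B ltac:(lra)) as G.
    unfold y in G. destruct L as [_ L2]. rewrite L2, hnorm_scal, Cmod_R, Rabs_right in G
      by (left; apply Rinv_0_lt_compat; auto).
    apply (Rmult_le_compat_r (hnorm x)) in G; [|lra].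
    rewrite Rmult_comm, <- Rmult_assoc, Rinv_r, Rmult_1_l in G by lra. auto.
Qed.

Definition zero_map {H1 H2 : HSpace} : H1 -> H2 := fun _ => hzero.

Lemma zero_map_lin {H1 H2 : HSpace} : is_linear (@zero_map H1 H2).
Proof. split; intros; unfold zero_map. symmetry; apply ax_zero. rewrite scal_zero; auto. Qed.
Lemma zero_map_bnd {H1 H2 : HSpace} : is_bounded (@zero_map H1 H2).
Proof. exists 0. split; [lra|]. intros. unfold zero_map. rewrite hnorm_zero. lra. Qed.
Lemma zero_map_rank {H1 H2 : HSpace} k : rank_le k (@zero_map H1 H2).
Proof. exists (fun _ => hzero). intros x. exists (fun _ => RtoC 0). rewrite lincomb_zero. auto. Qed.

Lemma snum_nonneg {H1 H2 : HSpace} (S : H1 -> H2) k : 0 <= snum S k.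
Proof. unfold snum. apply glb_nonneg. intros r (F & _ & _ & _ & ->). apply opnorm_nonneg. Qed.

Lemma snum_le {H1 H2 : HSpace} (S : H1 -> H2) k (F : H1 -> H2) :
  is_linear F -> is_bounded F -> rank_le k F -> snum S k <= opnorm (fun x => hsub (S x) (F x)).
Proof.
  intros. unfold snum. apply (glb_le _ 0).
  - intros r (G & _ & _ & _ & ->). apply opnorm_nonneg.
  - exists F. auto.
Qed.

Lemma snum_ge {H1 H2 : HSpace} (S : H1 -> H2) k d :
  (forall F : H1 -> H2, is_linear F -> is_bounded F -> rank_le k F ->
     d <= opnorm (fun x => hsub (S x) (F x))) -> d <= snum S k.
Proof.
  intros HF. unfold snum. apply glb_ge.
  - intros r (G & L & B & R & ->). auto.
  - exists (opnorm (fun x => hsub (S x) (zero_map x))). exists zero_map.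
    split; [apply zero_map_lin|split; [apply zero_map_bnd|split; [apply zero_map_rank|auto]]].
Qed.

Lemma Aop_lb {H : HSpace} w (e : nat -> H) Hw O :
  is_linear (Aop w e Hw O) /\ is_bounded (Aop w e Hw O).
Proof.
  split. split; intros; [apply Aop_add|apply Aop_scal].
  exists 1. split; [lra|]. intros. rewrite Rmult_1_l. apply Aop_bound.
Qed.

Definition Abh {H : HSpace} w (e : nat -> H) Hw O : BH H := exist _ (Aop w e Hw O) (Aop_lb w e Hw O).

Lemma snum_Aop {H : HSpace} w (e : nat -> H) Hw O n : snum (Aop w e Hw O) n <= w ^ n.
Proof.
  eapply Rle_trans. apply (snum_le _ n (Sn w e n)).
  - split; intros; [apply Sn_add|apply Sn_scal].
  - exists 1. split; [lra|]. intros. rewrite Rmult_1_l. apply Sn_bound; auto.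
  - exists e. intros x. exists (dcoef w e x). auto.
  - apply opnorm_le. intros x Hx. eapply Rle_trans. apply Aop_tail.
    pose proof (pow_le w n ltac:(lra)). nra.
Qed.

Lemma lub_nonneg2 (E : R -> Prop) : (forall x, E x -> 0 <= x) -> 0 <= real (Lub_Rbar E).
Proof.
  intros HM. destruct (classic (exists x, E x)) as [Hn|Hn].
  - apply lub_nonneg; auto.
  - destruct (Lub_Rbar_correct E) as [Hub Hl].
    assert (Rbar_le (Lub_Rbar E) m_infty).
    { apply Hl. intros x Hx. exfalso; eauto. }
    destruct (Lub_Rbar E); simpl in *; try contradiction; lra.
Qed.

Lemma pigeon (l : list nat) n : (length l <= n)%nat -> exists j, (j <= n)%nat /\ ~ In j l.
Proof.
  intros Hl. apply NNPP. intros Hc.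
  assert (incl (seq 0 (S n)) l).
  { intros j Hj. apply in_seq in Hj. apply NNPP. intros Hn. apply Hc. exists j. split; auto. lia. }
  pose proof (NoDup_incl_length (seq_NoDup (S n) 0) H). rewrite length_seq in H0. lia.
Qed.

Lemma fresh (l : list nat) : exists j, ~ In j l.
Proof. destruct (pigeon l (length l) (le_n _)) as [j [_ Hj]]; eauto. Qed.

Definition tailsup (a : nat -> C) (l : list nat) : R :=
  real (Lub_Rbar (fun s => exists j, ~ In j l /\ s = Cmod (a j))).

Lemma dstar_eq a k : dstar a k = real (Glb_Rbar (fun r => exists l : list nat, (length l <= k)%nat /\ r = tailsup a l)).
Proof. reflexivity. Qed.

Lemma tailsup_nonneg a l : 0 <= tailsup a l.
Proof. apply lub_nonneg2. intros s [j [_ ->]]. apply Cmod_ge_0. Qed.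

Lemma tailsup_le a l M : (forall j, ~ In j l -> Cmod (a j) <= M) -> tailsup a l <= M.
Proof.
  intros HM. apply lub_le. intros s [j [Hj ->]]. auto.
  destruct (fresh l) as [j Hj]. eauto.
Qed.

Lemma tailsup_ge a l M j : (forall i, Cmod (a i) <= M) -> ~ In j l -> Cmod (a j) <= tailsup a l.
Proof. intros HM Hj. apply (lub_ge _ M). intros s [i [_ ->]]. auto. eauto. Qed.

Lemma dstar_le a n (l : list nat) M : (length l <= n)%nat -> (forall j, ~ In j l -> Cmod (a j) <= M) ->
  dstar a n <= M.
Proof.
  intros Hl HM. rewrite dstar_eq. eapply Rle_trans. apply (glb_le _ 0).
  - intros r [l' [_ ->]]. apply tailsup_nonneg.
  - exists l. split; eauto.
  - apply tailsup_le; auto.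
Qed.

Lemma dstar_ge a n d M : (forall i, Cmod (a i) <= M) -> (forall j, (j <= n)%nat -> d <= Cmod (a j)) ->
  d <= dstar a n.
Proof.
  intros HM Hd. rewrite dstar_eq. apply glb_ge.
  - intros r [l [Hl ->]]. destruct (pigeon l n Hl) as [j [Hj Hn]].
    eapply Rle_trans. apply (Hd j Hj). apply (tailsup_ge _ _ M); auto.
  - exists (tailsup a nil). exists nil. simpl. split; auto. lia.
Qed.

Lemma c0_bounded a : is_c0 a -> exists M, forall i, Cmod (a i) <= M.
Proof.
  intros Hc. apply is_lim_seq_spec in Hc. destruct (Hc (mkposreal 1 Rlt_0_1)) as [N HN].
  exists (1 + rsum N (fun i => Cmod (a i))). intros i.
  destruct (le_lt_dec N i).
  - specialize (HN i l). simpl in HN. rewrite Rminus_0_r, Rabs_right in HN by (apply Rle_ge, Cmod_ge_0).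
    pose proof (rsum_ge0 N (fun i => Cmod (a i)) (fun _ _ => Cmod_ge_0 _)). lra.
  - clear Hc HN. assert (Cmod (a i) <= rsum N (fun i => Cmod (a i))).
    { induction N; [lia|]. simpl. destruct (Nat.eq_dec i N).
      - subst. pose proof (rsum_ge0 N (fun i => Cmod (a i)) (fun _ _ => Cmod_ge_0 _)). lra.
      - pose proof (IHN ltac:(lia)). pose proof (Cmod_ge_0 (a N)). lra. }
    lra.
Qed.

Definition Iexp (b : nat -> C) : Prop :=
  is_c0 b /\ exists Cc r, 0 < r < 1 /\ 0 <= Cc /\
    forall n, exists l : list nat, (length l <= n)%nat /\ forall j, ~ In j l -> Cmod (b j) <= Cc * r ^ n.

Lemma div2_bounds n : (2 * Nat.div2 n <= n <= 2 * Nat.div2 n + 1)%nat.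
Proof.
  destruct (Nat.Even_or_Odd n) as [E|E].
  - apply Nat.Even_double in E. unfold Nat.double in E. lia.
  - apply Nat.Odd_double in E. unfold Nat.double in E. lia.
Qed.

Lemma is_c0_ext a b : (forall n, Cmod (b n) <= Cmod (a n)) -> is_c0 a -> is_c0 b.
Proof.
  intros Hb Ha. unfold is_c0 in *. apply is_lim_seq_le_le with (fun _ => 0) (fun n => Cmod (a n)); auto.
  intros; split; auto. apply Cmod_ge_0. apply is_lim_seq_const.
Qed.

Lemma Iexp_calkin : is_calkin Iexp.
Proof.
  split; [|split; [|split; [|split]]].
  - intros a [H _]; auto.
  - split. unfold is_c0. apply is_lim_seq_ext with (fun _ => 0). intros; rewrite Cmod_0; auto. apply is_lim_seq_const.
    exists 0, (/2). split; [lra|split; [lra|]]. intros n. exists nil. split; simpl; [lia|]. intros j _.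
    rewrite Cmod_0. lra.
  - intros a b [Ha (Ca & ra & Hra & HCa & Ba)] [Hb (Cb & rb & Hrb & HCb & Bb)]. split.
    + unfold is_c0 in *. apply is_lim_seq_le_le with (fun _ => 0) (fun n => Cmod (a n) + Cmod (b n)).
      intros; split; [apply Cmod_ge_0|apply Cmod_triangle]. apply is_lim_seq_const. apply lim_plus0; auto.
    + set (rho := Rmax ra rb). set (s := sqrt rho).
      assert (Hrho : 0 < rho < 1) by (unfold rho; split; [apply (Rlt_le_trans _ ra); [lra|apply Rmax_l]|apply Rmax_lub_lt; lra]).
      assert (Hs : 0 < s < 1).
      { unfold s. split. apply sqrt_lt_R0; lra. rewrite <- sqrt_1. apply sqrt_lt_1; lra. }
      exists ((Ca + Cb) / s), s. split; auto. split. apply Rdiv_le_0_compat; lra.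
      intros n. set (m := Nat.div2 n). pose proof (div2_bounds n) as Hm. fold m in Hm.
      destruct (Ba m) as [la [Hla Hja]]. destruct (Bb m) as [lb [Hlb Hjb]].
      exists (la ++ lb). split. rewrite length_app. lia.
      intros j Hj. assert (~ In j la) by (intros X; apply Hj, in_or_app; auto).
      assert (~ In j lb) by (intros X; apply Hj, in_or_app; auto).
      eapply Rle_trans. apply Cmod_triangle.
      assert (ra ^ m <= rho ^ m) by (apply pow_incr; split; [lra|apply Rmax_l]).
      assert (rb ^ m <= rho ^ m) by (apply pow_incr; split; [lra|apply Rmax_r]).
      assert (rho ^ m <= s ^ n / s).
      { replace rho with (s ^ 2) by (unfold s; simpl; rewrite Rmult_1_r, sqrt_sqrt; lra).
        rewrite <- pow_mult. assert (Hq : s ^ (2 * m + 1) <= s ^ n) by (apply pow_decr; lra || lia).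
        rewrite pow_add, pow_1 in Hq. apply (Rmult_le_reg_r s); [lra|].
        unfold Rdiv. rewrite Rmult_assoc, Rinv_l, Rmult_1_r by lra. auto. }
      specialize (Hja j H). specialize (Hjb j H0).
      pose proof (pow_le ra m ltac:(lra)). pose proof (pow_le rb m ltac:(lra)).
      assert (Ca * ra ^ m <= Ca * (s ^ n / s)) by (apply Rmult_le_compat_l; lra).
      assert (Cb * rb ^ m <= Cb * (s ^ n / s)) by (apply Rmult_le_compat_l; lra).
      replace ((Ca + Cb) / s * s ^ n) with (Ca * (s ^ n / s) + Cb * (s ^ n / s)) by (field; lra). lra.
  - intros c a [Ha (Ca & ra & Hra & HCa & Ba)]. split.
    + unfold is_c0 in *. apply is_lim_seq_ext with (fun n => Cmod c * Cmod (a n)).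
      intros; rewrite Cmod_mult; auto.
      replace (Finite 0) with (Rbar_mult (Cmod c) 0) by (simpl; f_equal; ring).
      apply is_lim_seq_scal_l. auto.
    + exists (Cmod c * Ca), ra. split; auto. split. apply Rmult_le_pos; auto. apply Cmod_ge_0.
      intros n. destruct (Ba n) as [l [Hl Hj]]. exists l. split; auto. intros j Hn.
      rewrite Cmod_mult, Rmult_assoc. apply Rmult_le_compat_l. apply Cmod_ge_0. auto.
  - intros a b [Ha (Ca & ra & Hra & HCa & Ba)] Hb Hd. split; auto.
    destruct (c0_bounded b Hb) as [Mb HMb].
    exists (2 * Ca + 1), ra. split; auto. split; [lra|]. intros n.
    assert (Da : dstar a n <= Ca * ra ^ n).
    { destruct (Ba n) as [l [Hl Hj]]. apply (dstar_le a n l); auto. }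
    pose proof (Hd n) as Db.
    pose proof (pow_le ra n ltac:(lra)) as Hp.
    assert (Hrn : 0 < ra ^ n) by (apply pow_lt; lra).
    rewrite dstar_eq in Db.
    destruct (glb_approx (fun r => exists l : list nat, (length l <= n)%nat /\ r = tailsup b l) 0 (Ca * ra ^ n + ra ^ n))
      as [r0 [[l [Hl ->]] Hr0]].
    + intros r [l [_ ->]]. apply tailsup_nonneg.
    + exists (tailsup b nil). exists nil. simpl. split; auto. lia.
    + pose proof (Rmult_le_pos Ca (ra ^ n) HCa Hp). lra.
    + exists l. split; auto. intros j Hj. eapply Rle_trans. apply (tailsup_ge b l Mb); auto.
      lra.
Qed.

Lemma geom_Iexp w : 0 < w < 1 -> Iexp (fun n => RtoC (w ^ n)).
Proof.
  intros Hw. split.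
  - unfold is_c0. apply is_lim_seq_ext with (fun n => w ^ n).
    intros n. rewrite Cmod_R, Rabs_right; auto. apply Rle_ge, pow_le; lra.
    apply is_lim_seq_geom. rewrite Rabs_right; lra.
  - exists 1, w. split; auto. split; [lra|]. intros n. exists (seq 0 n). split. rewrite length_seq; lia.
    intros j Hj. rewrite Cmod_R, Rabs_right by (apply Rle_ge, pow_le; lra). rewrite Rmult_1_l.
    apply pow_decr. lra. destruct (le_lt_dec n j); auto. exfalso. apply Hj. apply in_seq. lia.
Qed.

Lemma csum_point n (f g : nat -> C) j : (j < n)%nat -> (forall q, q <> j -> f q = g q) ->
  csum n f = Cplus (csum n g) (Cminus (f j) (g j)).
Proof.
  induction n; intros Hj E; [lia|]. simpl.
  destruct (Nat.eq_dec j n).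
  - subst. rewrite (csum_ext n f g) by (intros; apply E; lia). ring.
  - rewrite IHn by (try exact E; lia). rewrite (E n) by lia. ring.
Qed.

Definition swap (p r q : nat) : nat := if Nat.eqb q p then r else if Nat.eqb q r then p else q.

Lemma swap_invol p r q : swap p r (swap p r q) = q.
Proof.
  unfold swap. destruct (Nat.eqb q p) eqn:E1; destruct (Nat.eqb q r) eqn:E2;
    rewrite ?Nat.eqb_eq, ?Nat.eqb_neq in *; subst;
    repeat (rewrite ?Nat.eqb_refl; try (destruct (Nat.eqb _ _) eqn:?; rewrite ?Nat.eqb_eq, ?Nat.eqb_neq in *; subst)); auto; try lia.
Qed.

Lemma swap_lt p r q n : (p < n)%nat -> (r < n)%nat -> (q < n)%nat -> (swap p r q < n)%nat.
Proof. unfold swap. destruct (Nat.eqb q p); destruct (Nat.eqb q r); auto. Qed.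

Lemma csum_swap n (g : nat -> C) p r : (p < n)%nat -> (r < n)%nat ->
  csum n (fun q => g (swap p r q)) = csum n g.
Proof.
  intros Hp Hr. destruct (Nat.eq_dec p r).
  - subst. apply csum_ext. intros q _. unfold swap. destruct (Nat.eqb q r) eqn:E; auto.
    apply Nat.eqb_eq in E; subst; auto.
  - set (g2 := fun q => if Nat.eqb q p then g r else g q).
    rewrite (csum_point n _ g2 r) by (auto; intros q Hq; unfold g2, swap;
      destruct (Nat.eqb q p); auto; rewrite (proj2 (Nat.eqb_neq q r)) by auto; auto).
    rewrite (csum_point n g2 g p) by (auto; intros q Hq; unfold g2; rewrite (proj2 (Nat.eqb_neq q p)) by auto; auto).
    unfold g2, swap. rewrite Nat.eqb_refl, (proj2 (Nat.eqb_neq r p)) by auto. rewrite Nat.eqb_refl.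
    ring.
Qed.

Lemma kernel_exists k : forall c : nat -> nat -> C, exists a : nat -> C,
  (exists q, (q <= k)%nat /\ a q <> RtoC 0) /\
  forall i, (i < k)%nat -> csum (S k) (fun q => Cmult (a q) (c q i)) = RtoC 0.
Proof.
  induction k; intros c.
  - exists (fun _ => RtoC 1). split. exists 0%nat. split; auto. intros E. injection E; lra.
    intros; lia.
  - destruct (classic (exists p, (p <= S k)%nat /\ c p k <> RtoC 0)) as [[p [Hp Hcp]]|Hno].
    + set (c' := fun q i => c (swap p (S k) q) i).
      set (P := c' (S k) k).
      assert (HP : P <> RtoC 0).
      { unfold P, c', swap. rewrite Nat.eqb_refl. destruct (Nat.eqb (S k) p) eqn:E; auto.
        apply Nat.eqb_eq in E; subst; auto. }
      set (c'' := fun q i => Cminus (c' q i) (Cmult (Cdiv (c' q k) P) (c' (S k) i))).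
      destruct (IHk c'') as [a'' [[q0 [Hq0 Ha0]] Ha'']].
      set (X := csum (S k) (fun q => Cmult (a'' q) (c' q k))).
      set (b := fun q => if Nat.leb q k then a'' q else Copp (Cdiv X P)).
      assert (Hb : forall i, (i < S k)%nat -> csum (S (S k)) (fun q => Cmult (b q) (c' q i)) = RtoC 0).
      { intros i Hi. change (csum (S (S k)) (fun q => Cmult (b q) (c' q i))) with
          (Cplus (csum (S k) (fun q => Cmult (b q) (c' q i))) (Cmult (b (S k)) (c' (S k) i))).
        rewrite (csum_ext (S k) _ (fun q => Cplus (Cmult (a'' q) (c'' q i))
             (Cmult (Cmult (a'' q) (c' q k)) (Cdiv (c' (S k) i) P)))).
        2: { intros q Hq. unfold b. rewrite (proj2 (Nat.leb_le q k)) by lia. unfold c''. field. auto. }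
        rewrite csum_plus.
        rewrite (csum_ext (S k) (fun q => Cmult (Cmult (a'' q) (c' q k)) (Cdiv (c' (S k) i) P))
                   (fun q => Cmult (Cdiv (c' (S k) i) P) (Cmult (a'' q) (c' q k)))) by (intros; ring).
        rewrite csum_scal. fold X. unfold b. rewrite (proj2 (Nat.leb_gt (S k) k)) by lia.
        destruct (Nat.eq_dec i k).
        - subst i. unfold c''. rewrite (csum_ext (S k) _ (fun _ => RtoC 0)).
          rewrite csum_zero. fold P. field. auto.
          intros q _. fold P. field. auto.
        - rewrite Ha'' by lia. field. auto. }
      exists (fun q => b (swap p (S k) q)). split.
      * exists (swap p (S k) q0). split. apply (Nat.lt_succ_r). apply swap_lt; lia.
        rewrite swap_invol. unfold b. rewrite (proj2 (Nat.leb_le q0 k)) by lia. auto.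
      * intros i Hi. rewrite <- (Hb i Hi).
        rewrite <- (csum_swap (S (S k)) (fun q => Cmult (b q) (c' q i)) p (S k)) by lia.
        apply csum_ext. intros q _. unfold c'. rewrite swap_invol. auto.
    + destruct (IHk c) as [a [[q0 [Hq0 Ha0]] Ha]].
      exists (fun q => if Nat.leb q k then a q else RtoC 0). split.
      * exists q0. split. lia. rewrite (proj2 (Nat.leb_le q0 k)) by lia. auto.
      * intros i Hi. change (csum (S (S k)) ?f) with (Cplus (csum (S k) f) (f (S k))); cbv beta.
        rewrite (proj2 (Nat.leb_gt (S k) k)) by lia.
        rewrite (csum_ext (S k) _ (fun q => Cmult (a q) (c q i))) by
          (intros q Hq; rewrite (proj2 (Nat.leb_le q k)) by lia; auto).
        destruct (Nat.eq_dec i k).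
        -- subst. rewrite (csum_ext (S k) _ (fun _ => RtoC 0)). rewrite csum_zero. ring.
           intros q Hq. destruct (classic (c q k = RtoC 0)) as [E|E]. rewrite E; ring.
           exfalso. apply Hno. exists q. split; auto. lia.
        -- rewrite Ha by lia. ring.
Qed.

Lemma lincomb_nested {H : HSpace} n a (c : nat -> nat -> C) k (v : nat -> H) :
  lincomb n a (fun q => lincomb k (c q) v) = lincomb k (fun i => csum n (fun q => Cmult (a q) (c q i))) v.
Proof.
  induction n; simpl.
  - symmetry. apply lincomb_zero.
  - rewrite IHn, lincomb_scal, lincomb_add. auto.
Qed.

Lemma rsum_tail_zero n K f : (K <= n)%nat -> (forall q, (K <= q)%nat -> f q = 0) -> rsum n f = rsum K f.
Proof.
  induction n; intros HK Hf.
  - assert (K = 0%nat) by lia. subst; auto.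
  - destruct (Nat.eq_dec K (S n)). subst; auto.
    simpl. rewrite IHn by (auto; lia). rewrite Hf by lia. ring.
Qed.

Lemma rsum_ge_term n f j : (forall q, (q < n)%nat -> 0 <= f q) -> (j < n)%nat -> f j <= rsum n f.
Proof.
  induction n; intros Hf Hj; [lia|]. simpl.
  destruct (Nat.eq_dec j n).
  - subst. pose proof (rsum_ge0 n f (fun q Hq => Hf q ltac:(lia))). lra.
  - pose proof (IHn (fun q Hq => Hf q ltac:(lia)) ltac:(lia)). pose proof (Hf n ltac:(lia)). lra.
Qed.

Lemma hnorm_hsub_le {H : HSpace} (a b : H) : hnorm (hsub a b) <= hnorm a + hnorm b.
Proof. unfold hsub. eapply Rle_trans. apply hnorm_triangle. rewrite hnorm_opp. lra. Qed.

Lemma sub_lin {H1 H2 : HSpace} (S F : H1 -> H2) : is_linear S -> is_linear F ->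
  is_linear (fun x => hsub (S x) (F x)).
Proof.
  intros [S1 S2] [F1 F2]. split; intros.
  - rewrite S1, F1. apply hsub_add.
  - rewrite S2, F2. apply hsub_scal.
Qed.

Lemma sub_bnd {H1 H2 : HSpace} (S F : H1 -> H2) : is_bounded S -> is_bounded F ->
  is_bounded (fun x => hsub (S x) (F x)).
Proof.
  intros [a [Ha BA]] [b [Hb BB]]. exists (a + b). split; [lra|]. intros x.
  eapply Rle_trans. apply hnorm_hsub_le. pose proof (BA x); pose proof (BB x). lra.
Qed.

Lemma diag_snum_lb {H : HSpace} (e : nat -> H) (O : orthonormal e) (N : nat) (lam : nat -> R)
  (d : R) (T : H -> H) :
  0 < d -> (forall q, (q < N)%nat -> d <= lam q) ->
  (forall x, T x = lincomb N (fun q => Cmult (RtoC (lam q)) (hinner x (e q))) e) ->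
  is_linear T -> is_bounded T -> forall k, (k < N)%nat -> d <= snum T k.
Proof.
  intros Hd Hlam HS LS BS k Hk. apply snum_ge. intros F LF BF [v HF].
  set (c := fun q => proj1_sig (constructive_indefinite_description _ (HF (e q)))).
  assert (Hc : forall q, F (e q) = lincomb k (c q) v).
  { intros q. unfold c. destruct (constructive_indefinite_description _ _). auto. }
  destruct (kernel_exists k c) as [a [[q0 [Hq0 Ha0]] Ha]].
  set (x := lincomb (S k) a e).
  assert (HFx : F x = hzero).
  { unfold x. rewrite lincomb_linear by auto. rewrite (lincomb_extv _ _ _ (fun q => lincomb k (c q) v)) by auto.
    rewrite lincomb_nested. rewrite (lincomb_ext k _ (fun _ => RtoC 0)). apply lincomb_zero.
    intros i Hi. apply Ha; auto. }
  assert (Hnx : nsq x = rsum (S k) (fun q => (Cmod (a q))^2)) by (apply nsq_lincomb; auto).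
  assert (Hpos : 0 < nsq x).
  { rewrite Hnx. eapply Rlt_le_trans; [|apply (rsum_ge_term _ _ q0)].
    apply pow2_gt_0. intros E. apply Cmod_eq_0 in E. auto.
    intros; apply pow2_ge_0. lia. }
  assert (HSx : d * d * nsq x <= nsq (T x)).
  { rewrite HS, nsq_lincomb by auto.
    eapply Rle_trans; [|apply (rsum_le N (fun q => d * d * (Cmod (hinner x (e q)))^2))].
    - rewrite rsum_scal. apply Rmult_le_compat_l. nra.
      rewrite (rsum_tail_zero N (S k)) by (auto; intros q Hq; unfold x; rewrite inner_lincomb_on by auto;
        rewrite (proj2 (Nat.ltb_ge q (S k))) by lia; rewrite Cmod_0; ring).
      rewrite Hnx. apply Req_le. apply rsum_ext. intros q Hq. unfold x. rewrite inner_lincomb_on by auto.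
      rewrite (proj2 (Nat.ltb_lt q (S k))) by lia. auto.
    - intros q Hq. rewrite Cmod_mult, Cmod_R. specialize (Hlam q Hq).
      rewrite Rabs_right by lra. pose proof (Cmod_ge_0 (hinner x (e q))).
      replace ((lam q * Cmod (hinner x (e q))) ^ 2) with (lam q * lam q * (Cmod (hinner x (e q)))^2) by ring.
      apply Rmult_le_compat_r. apply pow2_ge_0. nra. }
  assert (Hx0 : 0 < hnorm x) by (unfold hnorm; apply sqrt_lt_R0; auto).
  assert (Hlow : d * hnorm x <= hnorm (hsub (T x) (F x))).
  { rewrite HFx, hsub_zero. apply Rsqr_incr_0_var; [|apply hnorm_ge0]. unfold Rsqr.
    replace (d * hnorm x * (d * hnorm x)) with (d * d * (hnorm x * hnorm x)) by ring.
    rewrite !hnorm_sq. auto. }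
  pose proof (opnorm_apply (fun x => hsub (T x) (F x)) x (sub_lin T F LS LF) (sub_bnd T F BS BF)) as Hop.
  simpl in Hop. apply (Rmult_le_reg_r (hnorm x)); auto. lra.
Qed.

Definition ri (m q : nat) : nat := Nat.modulo q m.
Definition cj (m q : nat) : nat := Nat.div q m.
Definition sc (m : nat) : R := / INR (m * m).

Lemma sc_pos m : (1 <= m)%nat -> 0 < sc m.
Proof. intros. unfold sc. apply Rinv_0_lt_compat, lt_0_INR. nia. Qed.

Lemma sc_N m : (1 <= m)%nat -> INR (m * m) * sc m = 1.
Proof. intros. unfold sc. field. apply not_0_INR. nia. Qed.

Lemma hnorm_onb {H : HSpace} (e : nat -> H) q : orthonormal e -> hnorm (e q) = 1.
Proof. intros O. unfold hnorm. rewrite O, Nat.eqb_refl. simpl. apply sqrt_1. Qed.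

Lemma rsum_le_const n f a : (forall k, (k < n)%nat -> f k <= a) -> rsum n f <= INR n * a.
Proof. intros. rewrite <- rsum_const. apply rsum_le; auto. Qed.

Definition Bop {H : HSpace} (e : nat -> H) (m : nat) (x : H) : H -> H :=
  fun y => lincomb (m * m) (fun q => Cmult (RtoC (sc m)) (Cmult (hinner x (e q)) (hinner y (e (cj m q)))))
                   (fun q => e (ri m q)).

Lemma Bop_lin {H : HSpace} (e : nat -> H) m x : is_linear (Bop e m x).
Proof.
  split; intros; unfold Bop.
  - rewrite lincomb_add. apply lincomb_ext. intros. rewrite ax_inner_add. ring.
  - rewrite lincomb_scal. apply lincomb_ext. intros. rewrite ax_inner_scal. ring.
Qed.

Lemma Bop_bound {H : HSpace} (e : nat -> H) m x y : orthonormal e -> (1 <= m)%nat ->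
  hnorm (Bop e m x y) <= hnorm x * hnorm y.
Proof.
  intros O Hm. unfold Bop. eapply Rle_trans. apply hnorm_lincomb_le.
  eapply Rle_trans. apply (rsum_le_const _ _ (sc m * (hnorm x * hnorm y))).
  - intros k _. rewrite hnorm_onb by auto. rewrite Rmult_1_r, !Cmod_mult, Cmod_R.
    rewrite Rabs_right by (left; apply sc_pos; auto).
    apply Rmult_le_compat_l. left; apply sc_pos; auto.
    apply Rmult_le_compat; try apply Cmod_ge_0; apply coef_bound; auto.
  - rewrite <- Rmult_assoc, sc_N by auto. lra.
Qed.

Lemma Bop_lb {H : HSpace} (e : nat -> H) m x (O : orthonormal e) (Hm : (1 <= m)%nat) :
  is_linear (Bop e m x) /\ is_bounded (Bop e m x).
Proof.
  split. apply Bop_lin. exists (hnorm x). split. apply hnorm_ge0. intros; apply Bop_bound; auto.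
Qed.

Definition Bbh {H : HSpace} (e : nat -> H) m (O : orthonormal e) (Hm : (1 <= m)%nat) (x : H) : BH H :=
  exist _ (Bop e m x) (Bop_lb e m x O Hm).

Definition Apr {H : HSpace} (e : nat -> H) (m : nat) (X : BH H) : H :=
  lincomb (m * m) (fun q => Cmult (RtoC (sc m)) (hinner (proj1_sig X (e (cj m q))) (e (ri m q)))) e.

Lemma Apr_bound {H : HSpace} (e : nat -> H) m (X : BH H) : orthonormal e -> (1 <= m)%nat ->
  hnorm (Apr e m X) <= opnorm (proj1_sig X).
Proof.
  intros O Hm. unfold Apr. eapply Rle_trans. apply hnorm_lincomb_le.
  eapply Rle_trans. apply (rsum_le_const _ _ (sc m * opnorm (proj1_sig X))).
  - intros k _. rewrite hnorm_onb by auto. rewrite Rmult_1_r, !Cmod_mult, Cmod_R.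
    rewrite Rabs_right by (left; apply sc_pos; auto).
    apply Rmult_le_compat_l. left; apply sc_pos; auto.
    eapply Rle_trans. apply coef_bound; auto.
    destruct X as [X [LX BX]]. simpl. eapply Rle_trans. apply opnorm_apply; auto.
    rewrite hnorm_onb by auto. lra.
  - rewrite <- Rmult_assoc, sc_N by auto. lra.
Qed.

Lemma idx_eq m q k : (1 <= m)%nat -> ri m q = ri m k -> cj m q = cj m k -> q = k.
Proof.
  intros Hm E1 E2. unfold ri, cj in *.
  rewrite (Nat.div_mod_eq q m), (Nat.div_mod_eq k m), E1, E2. auto.
Qed.

Lemma ri_lt m q : (1 <= m)%nat -> (ri m q < m)%nat.
Proof. intros. apply Nat.mod_upper_bound. lia. Qed.
Lemma cj_lt m q : (1 <= m)%nat -> (q < m * m)%nat -> (cj m q < m)%nat.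
Proof. intros. unfold cj. apply Nat.Div0.div_lt_upper_bound. auto. Qed.

Definition lamb (w : R) (m k : nat) : R := sc m * sc m * w ^ (ri m k) * w ^ (cj m k).

Lemma composite_formula {H : HSpace} w (e : nat -> H) Hw O m (Hm : (1 <= m)%nat) x :
  Apr e m (MAA (Abh w e Hw O) (Bbh e m O Hm x)) =
  lincomb (m * m) (fun k => Cmult (RtoC (lamb w m k)) (hinner x (e k))) e.
Proof.
  unfold Apr. apply lincomb_ext. intros k Hk. simpl.
  rewrite Aop_inner, Aop_basis. unfold Bop. rewrite inner_lincomb_l.
  rewrite (csum_ext (m * m) _ (fun q => Cmult (Cmult (RtoC (sc m)) (Cmult (RtoC (w ^ cj m k)) (hinner x (e q))))
       (if Nat.eqb q k then RtoC 1 else RtoC 0))).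
  - rewrite csum_delta. rewrite (proj2 (Nat.ltb_lt k (m * m))) by auto.
    unfold lamb. apply injective_projections; simpl; ring.
  - intros q Hq. rewrite ax_inner_scal, !O.
    destruct (Nat.eqb q k) eqn:E.
    + apply Nat.eqb_eq in E. subst. rewrite !Nat.eqb_refl. apply injective_projections; simpl; ring.
    + apply Nat.eqb_neq in E.
      destruct (Nat.eqb (cj m k) (cj m q)) eqn:E1; destruct (Nat.eqb (ri m q) (ri m k)) eqn:E2;
        try (apply injective_projections; simpl; ring).
      apply Nat.eqb_eq in E1, E2. exfalso. apply E. apply idx_eq with m; auto.
Qed.

Lemma exists_nat_gt x : exists n, x < INR n.
Proof.
  destruct (archimed x) as [H1 _].
  destruct (Z_le_gt_dec (up x) 0) as [Hz|Hz].
  - exists 0%nat. simpl. apply IZR_le in Hz. lra.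
  - exists (Z.to_nat (up x)). rewrite INR_IZR_INZ, Z2Nat.id by lia. lra.
Qed.

Lemma pow2_ge_INR n : INR n <= 2 ^ n.
Proof.
  induction n. simpl; lra. rewrite S_INR. simpl. pose proof (pow_le 2 n ltac:(lra)).
  assert (1 <= 2 ^ n) by (rewrite <- (pow1 n); apply pow_incr; lra). lra.
Qed.

Lemma sq_le_pow2 n : (4 <= n)%nat -> INR n * INR n <= 2 ^ n.
Proof.
  induction n; intros Hn; [lia|].
  destruct (Nat.eq_dec n 3). { subst. simpl. lra. }
  specialize (IHn ltac:(lia)). rewrite S_INR. simpl.
  assert (3 <= INR n) by (replace 3 with (INR 3) by (simpl; lra); apply le_INR; lia). nra.
Qed.

Lemma analytic Cc r w : 0 < r < 1 -> 0 < w < 1 -> 0 <= Cc ->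
  exists m, (1 <= m)%nat /\ Cc * r ^ (m * m - 1) < sc m * sc m * w ^ m * w ^ m.
Proof.
  intros Hr Hw HC.
  destruct (pow_lt_1_zero r ltac:(rewrite Rabs_right; lra) (w * w / 8) ltac:(nra)) as [M1 HM1].
  destruct (exists_nat_gt (Cc / r)) as [M2 HM2].
  set (m := (4 + M1 + M2)%nat). exists m. split. unfold m; lia.
  set (P := 2 ^ m). set (W := w ^ m). set (rho := r ^ m).
  assert (HP : INR m * INR m <= P) by (apply sq_le_pow2; unfold m; lia).
  assert (HP2 : Cc / r < P).
  { eapply Rlt_le_trans. apply HM2. eapply Rle_trans; [|apply pow2_ge_INR]. apply le_INR. unfold m; lia. }
  assert (Hm0 : 0 < INR m) by (apply lt_0_INR; unfold m; lia).
  assert (HW : 0 < W) by (apply pow_lt; lra).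
  assert (Hrho : 0 < rho) by (apply pow_lt; lra).
  assert (Hrho2 : rho <= w * w / 8).
  { specialize (HM1 m ltac:(unfold m; lia)). rewrite Rabs_right in HM1 by (apply Rle_ge, pow_le; lra). fold rho in HM1. lra. }
  assert (Hsc : sc m = / (INR m * INR m)) by (unfold sc; rewrite mult_INR; auto).
  assert (Hr1 : r ^ (m * m - 1) * r = rho ^ m).
  { assert (Hmm : (1 <= m * m)%nat) by (unfold m; nia).
    unfold rho. rewrite <- pow_mult. replace (m * m)%nat with (S (m * m - 1)) at 2 by lia.
    simpl. ring. }
  assert (Hpow : rho ^ m <= W * W / (P * P * P)).
  { eapply Rle_trans. apply pow_incr. split. lra. apply Hrho2.
    replace (w * w / 8) with (w * (w * / (2 * 2 * 2))) by (field).
    rewrite !Rpow_mult_distr, pow_inv, !Rpow_mult_distr. unfold W, P. right. field; repeat split; apply pow_nonzero; lra. }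
  assert (HP0 : 0 < P) by (unfold P; apply pow_lt; lra).
  assert (Hrm : 0 <= r ^ (m * m - 1)) by (apply pow_le; lra).
  assert (Hlhs : Cc * r ^ (m * m - 1) <= Cc / r * (W * W / (P * P * P))).
  { unfold Rdiv. rewrite Rmult_assoc. apply Rmult_le_compat_l; auto.
    apply (Rmult_le_reg_l r). lra. replace (r * (/ r * (W * W * / (P * P * P)))) with (W * W / (P * P * P)) by (field; lra).
    rewrite Rmult_comm, Hr1. auto. }
  assert (Hrhs : W * W / (P * P) <= sc m * sc m * W * W).
  { rewrite Hsc. unfold Rdiv.
    replace (/ (INR m * INR m) * / (INR m * INR m) * W * W) with (W * W * (/ (INR m * INR m) * / (INR m * INR m))) by ring.
    apply Rmult_le_compat_l. nra. rewrite <- Rinv_mult.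
    apply Rinv_le_contravar. apply Rmult_lt_0_compat; apply Rmult_lt_0_compat; lra. apply Rmult_le_compat; nra. }
  assert (Cc / r * (W * W / (P * P * P)) < W * W / (P * P)).
  { replace (W * W / (P * P)) with (P * (W * W / (P * P * P))) by (field; lra).
    apply Rmult_lt_compat_r; [|exact HP2]. apply Rdiv_lt_0_compat; [apply Rmult_lt_0_compat; lra|]. apply Rmult_lt_0_compat; [apply Rmult_lt_0_compat|]; lra. }
  lra.
Qed.

Definition dm (w : R) (m : nat) : R := sc m * sc m * w ^ m * w ^ m.

Lemma lamb_bounds w m k : 0 < w < 1 -> (1 <= m)%nat -> (k < m * m)%nat ->
  dm w m <= lamb w m k /\ 0 <= lamb w m k /\ lamb w m k <= 1.
Proof.
  intros Hw Hm Hk. unfold dm, lamb.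
  pose proof (sc_pos m Hm).
  assert (sc m <= 1).
  { unfold sc. rewrite <- Rinv_1. apply Rinv_le_contravar. lra. replace 1 with (INR 1) by auto. apply le_INR. nia. }
  pose proof (ri_lt m k Hm). pose proof (cj_lt m k Hm Hk).
  assert (w ^ m <= w ^ ri m k) by (apply pow_decr; lra || lia).
  assert (w ^ m <= w ^ cj m k) by (apply pow_decr; lra || lia).
  assert (w ^ ri m k <= 1) by (rewrite <- (pow1 (ri m k)); apply pow_incr; lra).
  assert (w ^ cj m k <= 1) by (rewrite <- (pow1 (cj m k)); apply pow_incr; lra).
  pose proof (pow_le w m ltac:(lra)). pose proof (pow_le w (ri m k) ltac:(lra)). pose proof (pow_le w (cj m k) ltac:(lra)).
  assert (0 <= sc m * sc m) by nra. assert (sc m * sc m <= 1) by nra.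
  split; [|split].
  - apply Rmult_le_compat; [repeat apply Rmult_le_pos; lra | lra | apply Rmult_le_compat_l; lra | lra].
  - repeat apply Rmult_le_pos; lra.
  - replace 1 with (1 * 1 * 1) by ring. apply Rmult_le_compat; try nra.
Qed.

Lemma opnorm_MAA {H : HSpace} (A X : BH H) : (forall y, hnorm (proj1_sig A y) <= hnorm y) ->
  opnorm (proj1_sig (MAA A X)) <= opnorm (proj1_sig X).
Proof.
  intros HA. apply opnorm_le. intros h Hh. simpl.
  eapply Rle_trans. apply HA. destruct X as [X [LX BX]]. simpl.
  eapply Rle_trans. apply opnorm_apply; auto.
  pose proof (opnorm_nonneg X). pose proof (HA h). pose proof (hnorm_ge0 (proj1_sig A h)). nra.
Qed.

Lemma hnum_set_bound {H : HSpace} (A : BH H) k : (forall y, hnorm (proj1_sig A y) <= hnorm y) ->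
  forall r, (exists (H' K' : HSpace) (A' : BH H -> H') (B' : K' -> BH H),
     (forall X Y Z : BH H, (forall h, proj1_sig Z h = hadd (proj1_sig X h) (proj1_sig Y h)) ->
         A' Z = hadd (A' X) (A' Y)) /\
     (forall (a : C) (X Z : BH H), (forall h, proj1_sig Z h = hscal a (proj1_sig X h)) ->
         A' Z = hscal a (A' X)) /\
     (forall X : BH H, hnorm (A' X) <= opnorm (proj1_sig X)) /\
     (forall x y h, proj1_sig (B' (hadd x y)) h = hadd (proj1_sig (B' x) h) (proj1_sig (B' y) h)) /\
     (forall a x h, proj1_sig (B' (hscal a x)) h = hscal a (proj1_sig (B' x) h)) /\
     (forall x, opnorm (proj1_sig (B' x)) <= hnorm x) /\
     r = snum (fun x => A' (MAA A (B' x))) k) -> r <= 1.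
Proof.
  intros HA r (H' & K' & A' & B' & _ & _ & CA & _ & _ & CB & ->).
  eapply Rle_trans. apply (snum_le _ k zero_map zero_map_lin zero_map_bnd (zero_map_rank k)).
  apply opnorm_le. intros x Hx. unfold zero_map. rewrite hsub_zero.
  eapply Rle_trans. apply CA. eapply Rle_trans. apply opnorm_MAA; auto.
  eapply Rle_trans. apply CB. auto.
Qed.

Lemma hnum_lower {H : HSpace} w (e : nat -> H) Hw O m (Hm : (1 <= m)%nat) k : (k < m * m)%nat ->
  dm w m <= hnum (MAA (Abh w e Hw O)) k.
Proof.
  intros Hk. unfold hnum. eapply Rle_trans; [|apply (lub_ge _ 1)].
  2: { apply hnum_set_bound. intros y. apply Aop_bound. }
  2: { exists H, H, (Apr e m), (Bbh e m O Hm).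
       split; [|split; [|split; [|split; [|split; [|split]]]]].
       - intros X Y Z HZ. unfold Apr. rewrite lincomb_add. apply lincomb_ext. intros q _.
         rewrite HZ, ax_inner_add. ring.
       - intros a X Z HZ. unfold Apr. rewrite lincomb_scal. apply lincomb_ext. intros q _.
         rewrite HZ, ax_inner_scal. ring.
       - intros X. apply Apr_bound; auto.
       - intros x y h. simpl. unfold Bop. rewrite lincomb_add. apply lincomb_ext. intros q _.
         rewrite ax_inner_add. ring.
       - intros a x h. simpl. unfold Bop. rewrite lincomb_scal. apply lincomb_ext. intros q _.
         rewrite ax_inner_scal. ring.
       - intros x. apply opnorm_le. intros y Hy. simpl. eapply Rle_trans. apply Bop_bound; auto.
         pose proof (hnorm_ge0 x). nra.
       - reflexivity. }
  apply (diag_snum_lb e O (m * m) (lamb w m) (dm w m)).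
  - unfold dm. pose proof (sc_pos m Hm). pose proof (pow_lt w m ltac:(lra)).
    repeat apply Rmult_lt_0_compat; auto.
  - intros q Hq. apply lamb_bounds; auto.
  - intros x. apply composite_formula.
  - split; intros; rewrite !composite_formula.
    + rewrite lincomb_add. apply lincomb_ext. intros. rewrite ax_inner_add. ring.
    + rewrite lincomb_scal. apply lincomb_ext. intros. rewrite ax_inner_scal. ring.
  - exists (INR (m * m)). split. apply pos_INR. intros x. rewrite composite_formula.
    eapply Rle_trans. apply hnorm_lincomb_le. apply rsum_le_const. intros q Hq.
    rewrite hnorm_onb, Rmult_1_r, Cmod_mult, Cmod_R by auto.
    destruct (lamb_bounds w m q Hw Hm Hq) as (_ & L0 & L1). rewrite Rabs_right by lra.
    pose proof (coef_bound e x q O). pose proof (Cmod_ge_0 (hinner x (e q))). nra.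
  - auto.
Qed.

Theorem proposition4p8 :
  forall (H : HSpace), separable H -> infinite_dim H ->
  forall w : R, 0 < w < 1 ->
  exists A : BH H,
    in_principal (fun n => RtoC (w ^ n)) (fun n => RtoC (snum (proj1_sig A) n)) /\
    ~ in_principal (fun n => RtoC (w ^ n)) (fun n => RtoC (hnum (MAA A) n)).
Proof.
  intros H _ Hinf w Hw.
  set (e := onb Hinf). pose proof (onb_orthonormal Hinf) as O. fold e in O.
  exists (Abh w e Hw O). split.
  - intros I HI Hg. destruct HI as (_ & _ & _ & _ & Hdom). apply (Hdom _ _ Hg).
    + unfold is_c0. simpl.
      apply is_lim_seq_le_le with (fun _ => 0) (fun n => w ^ n).
      * intros n. rewrite Cmod_R, Rabs_right by (apply Rle_ge, snum_nonneg). split. apply snum_nonneg. apply snum_Aop.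
      * apply is_lim_seq_const.
      * apply is_lim_seq_geom. rewrite Rabs_right; lra.
    + intros n. apply Rle_trans with (w ^ n).
      * apply (dstar_le _ n (seq 0 n)). rewrite length_seq; lia.
        intros j Hj. simpl. rewrite Cmod_R, Rabs_right by (apply Rle_ge, snum_nonneg).
        eapply Rle_trans. apply snum_Aop. apply pow_decr. lra.
        destruct (le_lt_dec n j); auto. exfalso. apply Hj. apply in_seq. lia.
      * apply (dstar_ge _ n _ 1).
        -- intros i. rewrite Cmod_R, Rabs_right by (apply Rle_ge, pow_le; lra).
           rewrite <- (pow1 i). apply pow_incr; lra.
        -- intros j Hj. rewrite Cmod_R, Rabs_right by (apply Rle_ge, pow_le; lra). apply pow_decr; lra || lia.
  - intros Hp. specialize (Hp Iexp Iexp_calkin (geom_Iexp w Hw)).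
    destruct Hp as [_ (Cc & r & Hr & HC & Hb)].
    destruct (analytic Cc r w Hr Hw HC) as [m [Hm Hlt]].
    destruct (Hb (m * m - 1)%nat) as [l [Hl Hj]].
    destruct (pigeon l (m * m - 1) Hl) as [j [Hj1 Hj2]].
    specialize (Hj j Hj2).
    pose proof (hnum_lower w e Hw O m Hm j ltac:(nia)) as Hlow.
    rewrite Cmod_R in Hj. pose proof (Rle_abs (hnum (MAA (Abh w e Hw O)) j)).
    unfold dm in Hlow. lra.
Qed.
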